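(* Let $\mathcal{H},\mathcal{G},\mathcal{K}$ be real Hilbert spaces. Let $f:\mathcal{H}\to\mathbb{R}\cup\{+\infty\}$ be proper, convex, lower semicontinuous and $\gamma$-strongly convex for some $\gamma>0$; let $g:\mathcal{G}\to\mathbb{R}\cup\{+\infty\}$ be proper, convex and lower semicontinuous; let $h_1:\mathcal{H}\to\mathbb{R}$ be convex and Fréchet differentiable with $L_1$-Lipschitz continuous gradient ($L_1\ge 0$); let $h_2:\mathcal{G}\to\mathbb{R}$ be convex and Fréchet differentiable with $L_2$-Lipschitz continuous gradient ($L_2\ge 0$); let $A:\mathcal{H}\to\mathcal{K}$, $B:\mathcal{G}\to\mathcal{K}$ be bounded linear operators with $A\neq 0$, and $b\in\mathcal{K}$. Assume that the set of saddle points of the Lagrangian $L$ (defined in the context) is nonempty. Let $(M_1^k)_{k\ge0}\subseteq\mathcal{S}_+(\mathcal{H})$, $(M_2^k)_{k\ge0}\subseteq\mathcal{S}_+(\mathcal{G})$ satisfy, for all $k\ge 0$: $M_1^k-\frac{L_1}{2}\mathrm{Id}\in\mathcal{S}_+(\mathcal{H})$, $M_1^k\succcurlyeq M_1^{k+1}$, $M_2^k-\frac{L_2}{2}\mathrm{Id}\in\mathcal{S}_+(\mathcal{G})$, $M_2^k\succcurlyeq M_2^{k+1}$. Let $(c_k)_{k\ge0}$ be monotonically decreasing with $\epsilon\le c_k\le \frac{2\gamma}{\|A\|^2}-\epsilon$ for all $k\ge0$, where $\epsilon\in(0,\gamma/\|A\|^2)$. Suppose that at least one of the following holds: (i) there exists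 $\alpha>0$ with $M_2^k-\frac{L_2}{2}\mathrm{Id}\in\mathcal{P}_\alpha(\mathcal{G})$ for all $k\ge0$; (ii) there exists $\beta>0$ with $B^*B\in\mathcal{P}_\beta(\mathcal{G})$. Then any sequence $(x^k,z^k,p^k)_{k\ge0}$ generated by the Proximal AMA iteration (see context), from any starting point $(x^0,z^0,p^0)\in\mathcal{H}\times\mathcal{G}\times\mathcal{K}$, converges weakly to a saddle point of $L$.
   Context: Notation: $\mathcal{S}_+(\mathcal{H})$ is the set of bounded linear self-adjoint positive semidefinite operators on $\mathcal{H}$; for $M\in\mathcal{S}_+(\mathcal{H})$, $\|x\|_M=\sqrt{\langle x,Mx\rangle}$; $M_1\succcurlyeq M_2$ means $\|x\|_{M_1}^2\ge\|x\|_{M_2}^2$ for all $x$; $\mathcal{P}_\alpha(\mathcal{H})=\{M\in\mathcal{S}_+(\mathcal{H}): M\succcurlyeq\alpha\,\mathrm{Id}\}$. $f$ is $\gamma$-strongly convex means $f-\frac{\gamma}{2}\|\cdot\|^2$ is convex. The problem is $\min_{x\in\mathcal{H},z\in\mathcal{G}} f(x)+h_1(x)+g(z)+h_2(z)$ subject to $Ax+Bz=b$. Its Lagrangian is $L(x,z,p)=f(x)+h_1(x)+g(z)+h_2(z)+\langle p,b-Ax-Bz\rangle$ on $\mathcal{H}\times\mathcal{G}\times\mathcal{K}$; $(x^*,z^*,p^* )$ is a saddle point if $L(x^*,z^*,p)\le L(x^*,z^*,p^* )\le L(x,z,p^* )$ for all $(x,z,p)$. Proximal AMA: given $(x^0,z^0,p^0)$,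 for all $k\ge0$, $x^{k+1}=\operatorname{argmin}_{x\in\mathcal{H}}\{f(x)-\langle p^k,Ax\rangle+\langle x-x^k,\nabla h_1(x^k)\rangle+\frac12\|x-x^k\|^2_{M_1^k}\}$, $z^{k+1}\in\operatorname{argmin}_{z\in\mathcal{G}}\{g(z)-\langle p^k,Bz\rangle+\frac{c_k}{2}\|Ax^{k+1}+Bz-b\|^2+\langle z-z^k,\nabla h_2(z^k)\rangle+\frac12\|z-z^k\|^2_{M_2^k}\}$, $p^{k+1}=p^k+c_k(b-Ax^{k+1}-Bz^{k+1})$. *)

(* Defs.v *)
From Stdlib Require Import Reals Lra.
Open Scope R_scope.

Record Hilbert := {
  hcar :> Type;
  vzero : hcar;
  vadd : hcar -> hcar -> hcar;
  vopp : hcar -> hcar;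
  vscal : R -> hcar -> hcar;
  inner : hcar -> hcar -> R;
  vadd_assoc : forall x y z, vadd x (vadd y z) = vadd (vadd x y) z;
  vadd_comm : forall x y, vadd x y = vadd y x;
  vadd_0l : forall x, vadd vzero x = x;
  vadd_oppl : forall x, vadd (vopp x) x = vzero;
  vscal_assoc : forall a b x, vscal a (vscal b x) = vscal (a * b) x;
  vscal_1 : forall x, vscal 1 x = x;
  vscal_distr_v : forall a x y, vscal a (vadd x y) = vadd (vscal a x) (vscal a y);
  vscal_distr_s : forall a b x, vscal (a + b) x = vadd (vscal a x) (vscal b x);
  inner_sym : forall x y, inner x y = inner y x;
  inner_add_l : forall x y z, inner (vadd x y) z = inner x z + inner y z;
  inner_scal_l : forall a x y, inner (vscal a x) y = a * inner x y;
  inner_pos : forall x, 0 <= inner x x;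
  inner_def : forall x, inner x x = 0 -> x = vzero;
  hcomplete : forall u : nat -> hcar,
    (forall eps, 0 < eps -> exists N, forall m n, (N <= m)%nat -> (N <= n)%nat ->
        sqrt (inner (vadd (u m) (vopp (u n))) (vadd (u m) (vopp (u n)))) < eps) ->
    exists l, forall eps, 0 < eps -> exists N, forall n, (N <= n)%nat ->
        sqrt (inner (vadd (u n) (vopp l)) (vadd (u n) (vopp l))) < eps
}.

Arguments vzero {_}.
Arguments vadd {_} _ _.
Arguments vopp {_} _.
Arguments vscal {_} _ _.
Arguments inner {_} _ _.

Definition vsub {H : Hilbert} (x y : H) : H := vadd x (vopp y).
Definition hnorm {H : Hilbert} (x : H) : R := sqrt (inner x x).

Inductive ER := Fin (r : R) | PInf.

Definition ERle (a b : ER) : Prop :=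
  match a, b with
  | _, PInf => True
  | PInf, Fin _ => False
  | Fin x, Fin y => x <= y
  end.

Definition ERaddR (a : ER) (r : R) : ER :=
  match a with Fin x => Fin (x + r) | PInf => PInf end.

Definition ERadd (a b : ER) : ER :=
  match a, b with Fin x, Fin y => Fin (x + y) | _, _ => PInf end.

Definition proper {H : Hilbert} (f : H -> ER) : Prop := exists x, f x <> PInf.

(* convexity: f(tx+(1-t)y) <= t f x + (1-t) f y (via the epigraph, with the
   convention t*(+oo) = +oo for t>0 and 0*(+oo)=0 handled by real bounds) *)
Definition convex {H : Hilbert} (f : H -> ER) : Prop :=
  forall (x y : H) (t a b : R), 0 <= t <= 1 ->
    ERle (f x) (Fin a) -> ERle (f y) (Fin b) ->
    ERle (f (vadd (vscal t x) (vscal (1 - t) y))) (Fin (t * a + (1 - t) * b)).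

Definition strongly_convex {H : Hilbert} (gamma : R) (f : H -> ER) : Prop :=
  convex (fun x => ERaddR (f x) (- (gamma / 2) * (hnorm x) ^ 2)).

Definition lsc {H : Hilbert} (f : H -> ER) : Prop :=
  forall (x : H) (a : R), ~ ERle (f x) (Fin a) ->
    exists delta, 0 < delta /\
      forall y, hnorm (vsub y x) < delta -> ~ ERle (f y) (Fin a).

Definition convex_real {H : Hilbert} (h : H -> R) : Prop :=
  convex (fun x => Fin (h x)).

Definition frechet_gradient {H : Hilbert} (h : H -> R) (grad : H -> H) : Prop :=
  forall x eps, 0 < eps -> exists delta, 0 < delta /\
    forall d : H, hnorm d < delta ->
      Rabs (h (vadd x d) - h x - inner (grad x) d) <= eps * hnorm d.

Definition lipschitz {H1 H2 : Hilbert} (Lc : R) (F : H1 -> H2) : Prop :=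
  forall x y, hnorm (vsub (F x) (F y)) <= Lc * hnorm (vsub x y).

Definition linear_op {H1 H2 : Hilbert} (T : H1 -> H2) : Prop :=
  (forall x y, T (vadd x y) = vadd (T x) (T y)) /\
  (forall a x, T (vscal a x) = vscal a (T x)).

Definition bounded_linear {H1 H2 : Hilbert} (T : H1 -> H2) : Prop :=
  linear_op T /\ exists C, forall x, hnorm (T x) <= C * hnorm x.

Definition opnorm_is {H1 H2 : Hilbert} (T : H1 -> H2) (n : R) : Prop :=
  is_lub (fun r => exists x, hnorm x <= 1 /\ r = hnorm (T x)) n.

Definition is_adjoint {H1 H2 : Hilbert} (T : H1 -> H2) (Ts : H2 -> H1) : Prop :=
  forall x y, inner (T x) y = inner x (Ts y).

Definition Mnorm2 {H : Hilbert} (M : H -> H) (x : H) : R := inner x (M x).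

Definition in_Splus {H : Hilbert} (M : H -> H) : Prop :=
  bounded_linear M /\ (forall x y, inner (M x) y = inner x (M y)) /\
  (forall x, 0 <= Mnorm2 M x).

Definition loewner_ge {H : Hilbert} (M1 M2 : H -> H) : Prop :=
  forall x, Mnorm2 M1 x >= Mnorm2 M2 x.

Definition in_Palpha {H : Hilbert} (alpha : R) (M : H -> H) : Prop :=
  in_Splus M /\ loewner_ge M (vscal alpha).

Definition op_minus_id {H : Hilbert} (M : H -> H) (c : R) : H -> H :=
  fun x => vsub (M x) (vscal c x).

Definition Lagr {H G K : Hilbert} (f : H -> ER) (h1 : H -> R) (g : G -> ER) (h2 : G -> R)
  (A : H -> K) (B : G -> K) (b : K) (x : H) (z : G) (p : K) : ER :=
  ERaddR (ERadd (ERaddR (f x) (h1 x)) (ERaddR (g z) (h2 z)))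
         (inner p (vsub (vsub b (A x)) (B z))).

Definition saddle_point {H G K : Hilbert} (f : H -> ER) (h1 : H -> R) (g : G -> ER)
  (h2 : G -> R) (A : H -> K) (B : G -> K) (b : K) (xs : H) (zs : G) (ps : K) : Prop :=
  forall x z p,
    ERle (Lagr f h1 g h2 A B b xs zs p) (Lagr f h1 g h2 A B b xs zs ps) /\
    ERle (Lagr f h1 g h2 A B b xs zs ps) (Lagr f h1 g h2 A B b x z ps).

Definition weak_cv {H : Hilbert} (u : nat -> H) (l : H) : Prop :=
  forall w : H, Un_cv (fun n => inner (u n) w) (inner l w).

Definition prox_AMA {H G K : Hilbert} (f : H -> ER) (g : G -> ER)
  (gh1 : H -> H) (gh2 : G -> G) (A : H -> K) (B : G -> K) (b : K)
  (M1 : nat -> H -> H) (M2 : nat -> G -> G) (c : nat -> R)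
  (x : nat -> H) (z : nat -> G) (p : nat -> K) : Prop :=
  forall k : nat,
    (forall u : H,
      ERle (ERaddR (f (x (S k)))
              (- inner (p k) (A (x (S k))) + inner (vsub (x (S k)) (x k)) (gh1 (x k))
               + / 2 * Mnorm2 (M1 k) (vsub (x (S k)) (x k))))
           (ERaddR (f u)
              (- inner (p k) (A u) + inner (vsub u (x k)) (gh1 (x k))
               + / 2 * Mnorm2 (M1 k) (vsub u (x k))))) /\
    (forall v : G,
      ERle (ERaddR (g (z (S k)))
              (- inner (p k) (B (z (S k)))
               + c k / 2 * (hnorm (vsub (vadd (A (x (S k))) (B (z (S k)))) b)) ^ 2
               + inner (vsub (z (S k)) (z k)) (gh2 (z k))
               + / 2 * Mnorm2 (M2 k) (vsub (z (S k)) (z k))))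
           (ERaddR (g v)
              (- inner (p k) (B v)
               + c k / 2 * (hnorm (vsub (vadd (A (x (S k))) (B v)) b)) ^ 2
               + inner (vsub v (z k)) (gh2 (z k))
               + / 2 * Mnorm2 (M2 k) (vsub v (z k))))) /\
    p (S k) = vadd (p k) (vscal (c k) (vsub (vsub b (A (x (S k)))) (B (z (S k))))).

(* Main.v *)
Require Import Defs.
From Stdlib Require Import Reals Lra Psatz ClassicalEpsilon Classical Arith.
Open Scope R_scope.

Arguments vadd_assoc {_} _ _ _.
Arguments vadd_comm {_} _ _.
Arguments vadd_0l {_} _.
Arguments vadd_oppl {_} _.
Arguments vscal_assoc {_} _ _ _.
Arguments vscal_1 {_} _.
Arguments vscal_distr_v {_} _ _ _.
Arguments vscal_distr_s {_} _ _ _.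
Arguments inner_sym {_} _ _.
Arguments inner_add_l {_} _ _ _.
Arguments inner_scal_l {_} _ _ _.
Arguments inner_pos {_} _.
Arguments inner_def {_} _ _.

Section Alg.
Context {H : Hilbert}.
Implicit Types x y z u v w : H.

Lemma vadd_0r x : vadd x vzero = x.
Proof. rewrite vadd_comm; apply vadd_0l. Qed.
Lemma vadd_oppr x : vadd x (vopp x) = vzero.
Proof. rewrite vadd_comm; apply vadd_oppl. Qed.
Lemma vadd_cancel a x y : vadd a x = vadd a y -> x = y.
Proof.
  intro E. rewrite <- (vadd_0l x), <- (vadd_0l y), <- (vadd_oppl a).
  rewrite <- !vadd_assoc, E; reflexivity.
Qed.
Lemma vscal_0 x : vscal 0 x = vzero.
Proof.
  apply (vadd_cancel (vscal 0 x)). rewrite <- vscal_distr_s, vadd_0r.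
  f_equal; ring.
Qed.
Lemma inner_0_l y : inner (@vzero H) y = 0.
Proof. rewrite <- (vscal_0 vzero), inner_scal_l; ring. Qed.
Lemma inner_opp_l x y : inner (vopp x) y = - inner x y.
Proof.
  assert (E: inner (vadd (vopp x) x) y = 0) by (rewrite vadd_oppl; apply inner_0_l).
  rewrite inner_add_l in E; lra.
Qed.
Lemma inner_sub_l x y w : inner (vsub x y) w = inner x w - inner y w.
Proof. unfold vsub; rewrite inner_add_l, inner_opp_l; ring. Qed.
Lemma inner_add_r x y z : inner x (vadd y z) = inner x y + inner x z.
Proof. rewrite !(inner_sym x); apply inner_add_l. Qed.
Lemma inner_scal_r a x y : inner x (vscal a y) = a * inner x y.
Proof. rewrite !(inner_sym x); apply inner_scal_l. Qed.
Lemma inner_opp_r x y : inner x (vopp y) = - inner x y.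
Proof. rewrite !(inner_sym x); apply inner_opp_l. Qed.
Lemma inner_sub_r x y w : inner w (vsub x y) = inner w x - inner w y.
Proof. rewrite !(inner_sym w); apply inner_sub_l. Qed.
Lemma inner_0_r y : inner y (@vzero H) = 0.
Proof. rewrite inner_sym; apply inner_0_l. Qed.

Lemma vsub_diag x : vsub x x = vzero.
Proof. apply vadd_oppr. Qed.

Lemma inner_ext u v : (forall w, inner u w = inner v w) -> u = v.
Proof.
  intro E. assert (Z: vsub u v = vzero).
  { apply inner_def. rewrite inner_sub_l, (E (vsub u v)); ring. }
  rewrite <- (vadd_0l v), <- Z. unfold vsub.
  rewrite <- vadd_assoc, vadd_oppl, vadd_0r; reflexivity.
Qed.

Lemma hnorm2 x : hnorm x ^ 2 = inner x x.
Proof. unfold hnorm; apply pow2_sqrt, inner_pos. Qed.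
Lemma hnorm_pos x : 0 <= hnorm x.
Proof. apply sqrt_pos. Qed.
Lemma hnorm_sq x : hnorm x * hnorm x = inner x x.
Proof. unfold hnorm; apply sqrt_sqrt, inner_pos. Qed.

End Alg.

Hint Rewrite @inner_add_l @inner_scal_l @inner_opp_l @inner_sub_l @inner_0_l
  @inner_add_r @inner_scal_r @inner_opp_r @inner_sub_r @inner_0_r : inE.

Ltac vexp := apply inner_ext; intro; autorewrite with inE.
Ltac vext := vexp; ring.

Section Alg2.
Context {H : Hilbert}.
Implicit Types x y z u v w : H.

Lemma vscal_0v a : vscal a (@vzero H) = vzero.
Proof. vext. Qed.

Lemma quad_disc a b c : (forall t, 0 <= a + 2 * b * t + c * t ^ 2) -> b ^ 2 <= a * c.
Proof.
  intro Q. assert (Ha: 0 <= a) by (specialize (Q 0); lra).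
  destruct (Req_dec c 0) as [Hc|Hc].
  - subst c. destruct (Req_dec b 0) as [Hb|Hb]. rewrite Hb; lra.
    specialize (Q (- (a + 1) / (2 * b))).
    assert (2 * b * (- (a + 1) / (2 * b)) = - (a+1)) by (field; auto). lra.
  - assert (Hc': 0 < c).
    { destruct (Rle_lt_dec c 0); [|lra]. assert (c < 0) by lra.
      set (T := (a + 2 * Rabs b + 1) / (- c) + 1).
      pose proof (Rabs_pos b).
      assert (HT1: (a + 2 * Rabs b + 1) / (- c) >= 0).
      { apply Rle_ge. apply Rmult_le_pos. lra. left; apply Rinv_0_lt_compat; lra. }
      assert (HT2: c * T <= - (a + 2 * Rabs b + 1)).
      { unfold T. rewrite Rmult_plus_distr_l. unfold Rdiv.
        replace (c * ((a + 2 * Rabs b + 1) * / - c)) with (- (a + 2 * Rabs b + 1)) by (field; lra). lra. }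
      assert (T >= 1) by (unfold T; lra).
      specialize (Q T). pose proof (Rle_abs b). pose proof (Rle_abs (-b)) as Hab. rewrite Rabs_Ropp in Hab.
      assert (2 * b * T <= 2 * Rabs b * T) by (apply Rmult_le_compat_r; lra).
      assert (c * T ^ 2 = (c * T) * T) by ring.
      assert ((c*T)*T <= - (a + 2 * Rabs b + 1) * T) by (apply Rmult_le_compat_r; lra).
      assert (0 <= (a+1)*(T-1)) by (apply Rmult_le_pos; lra). nra. }
    specialize (Q (- b / c)). field_simplify in Q; [|lra].
    apply Rmult_le_compat_r with (r := c) in Q; [|lra].
    unfold Rdiv in Q. rewrite Rmult_0_l, Rmult_assoc, Rinv_l in Q; lra.
Qed.

Lemma cs_sq x y : inner x y ^ 2 <= inner x x * inner y y.
Proof.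
  apply quad_disc. intro t. pose proof (inner_pos (vadd x (vscal t y))).
  autorewrite with inE in H0. rewrite (inner_sym y x) in H0. nra.
Qed.

Lemma cs x y : Rabs (inner x y) <= hnorm x * hnorm y.
Proof.
  apply Rsqr_incr_0_var. rewrite <- Rsqr_abs, Rsqr_mult. unfold Rsqr. rewrite !hnorm_sq.
  pose proof (cs_sq x y). simpl in H0. lra.
  pose proof (hnorm_pos x); pose proof (hnorm_pos y); nra.
Qed.
Lemma cs' x y : inner x y <= hnorm x * hnorm y.
Proof. pose proof (cs x y). pose proof (Rle_abs (inner x y)). lra. Qed.

Lemma hnorm_0 : hnorm (@vzero H) = 0.
Proof. unfold hnorm. rewrite inner_0_l. apply sqrt_0. Qed.

Lemma hnorm_scal a x : hnorm (vscal a x) = Rabs a * hnorm x.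
Proof.
  unfold hnorm. autorewrite with inE. rewrite <- Rmult_assoc, sqrt_mult.
  rewrite <- Rsqr_def, sqrt_Rsqr_abs; auto. apply Rle_0_sqr. apply inner_pos.
Qed.

Lemma hnorm_opp x : hnorm (vopp x) = hnorm x.
Proof. unfold hnorm. autorewrite with inE. f_equal; ring. Qed.

Lemma hnorm_triangle x y : hnorm (vadd x y) <= hnorm x + hnorm y.
Proof.
  apply Rsqr_incr_0_var. 2: pose proof (hnorm_pos x); pose proof (hnorm_pos y); lra.
  unfold Rsqr. rewrite hnorm_sq. autorewrite with inE.
  rewrite (inner_sym y x). pose proof (cs' x y).
  replace ((hnorm x + hnorm y) * (hnorm x + hnorm y)) with
   (hnorm x * hnorm x + hnorm y * hnorm y + 2 * (hnorm x * hnorm y)) by ring.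
  rewrite !hnorm_sq. lra.
Qed.

Lemma hnorm_sub_sym x y : hnorm (vsub x y) = hnorm (vsub y x).
Proof. unfold hnorm. autorewrite with inE. f_equal. rewrite (inner_sym x y). ring. Qed.

Lemma hnorm_sub_triangle x y z : hnorm (vsub x z) <= hnorm (vsub x y) + hnorm (vsub y z).
Proof.
  replace (vsub x z) with (vadd (vsub x y) (vsub y z)) by vext.
  apply hnorm_triangle.
Qed.

Lemma hnorm_eq0 x : hnorm x = 0 -> x = vzero.
Proof.
  intro E. apply inner_def. rewrite <- hnorm_sq, E; ring.
Qed.

Lemma young_inner x y e : 0 < e -> Rabs (inner x y) <= e / 2 * inner x x + / (2 * e) * inner y y.
Proof.
  intro He. pose proof (cs x y). rewrite <- !hnorm_sq.
  pose proof (hnorm_pos x). pose proof (hnorm_pos y).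
  assert (0 <= (e * hnorm x - hnorm y) ^ 2) by apply pow2_ge_0.
  assert (hnorm x * hnorm y <= e / 2 * (hnorm x * hnorm x) + / (2 * e) * (hnorm y * hnorm y)).
  { assert (E: e / 2 * (hnorm x * hnorm x) + / (2 * e) * (hnorm y * hnorm y) - hnorm x * hnorm y
       = / (2 * e) * (e * hnorm x - hnorm y) ^ 2) by (field; lra).
    assert (0 <= / (2 * e) * (e * hnorm x - hnorm y) ^ 2).
    { apply Rmult_le_pos; [left; apply Rinv_0_lt_compat; lra| apply pow2_ge_0]. }
    lra. }
  lra.
Qed.

End Alg2.

Lemma Rabs_le_b x a : Rabs x <= a -> - a <= x <= a.
Proof. intro E. pose proof (Rle_abs x). pose proof (Rle_abs (-x)). rewrite Rabs_Ropp in H0. lra. Qed.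

Lemma le_eps a b : (forall e, 0 < e -> a <= b + e) -> a <= b.
Proof.
  intro E. destruct (Rle_lt_dec a b); auto.
  specialize (E ((a - b)/2)). lra.
Qed.

Lemma le_eps_mult a b c : 0 <= c -> (forall e, 0 < e -> a <= b + e * c) -> a <= b.
Proof.
  intros Hc E. apply le_eps. intros e He.
  specialize (E (e / (c + 1))). 
  assert (0 < e / (c + 1)) by (apply Rdiv_lt_0_compat; lra).
  assert (e / (c + 1) * c <= e).
  { unfold Rdiv. rewrite Rmult_assoc, (Rmult_comm (/ _)).
    apply Rle_trans with (e * 1); [|lra]. apply Rmult_le_compat_l; [lra|].
    apply Rmult_le_reg_r with (c + 1); [lra|]. rewrite Rmult_assoc, Rinv_l; lra. }
  specialize (E H). lra.
Qed.

Section H1.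
Context {H : Hilbert}.
Variable h : H -> R.
Variable gh : H -> H.

Lemma vsegment (x y : H) t :
  vadd (vscal t y) (vscal (1 - t) x) = vadd x (vscal t (vsub y x)).
Proof. vext. Qed.

Lemma small_t (d : H) delta tau : 0 < delta -> 0 < tau ->
  exists t, 0 < t /\ t <= 1 /\ t <= tau /\ hnorm (vscal t d) < delta.
Proof.
  intros Hd Ht. set (t := Rmin (Rmin 1 tau) (delta / (2 * (hnorm d + 1)))).
  pose proof (hnorm_pos d).
  assert (Hq: 0 < delta / (2 * (hnorm d + 1))) by (apply Rdiv_lt_0_compat; lra).
  assert (0 < t) by (unfold t; repeat apply Rmin_glb_lt; lra).
  exists t. split; auto. split. unfold t. pose proof (Rmin_l (Rmin 1 tau) (delta / (2 * (hnorm d + 1)))).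
  pose proof (Rmin_l 1 tau). lra.
  split. unfold t. pose proof (Rmin_l (Rmin 1 tau) (delta / (2 * (hnorm d + 1)))).
  pose proof (Rmin_r 1 tau). lra.
  rewrite hnorm_scal, Rabs_right by lra.
  assert (t <= delta / (2 * (hnorm d + 1))) by apply Rmin_r.
  apply Rle_lt_trans with (delta / (2 * (hnorm d + 1)) * (hnorm d + 1)).
  apply Rmult_le_compat; lra.
  unfold Rdiv. rewrite Rmult_assoc, Rinv_mult, Rmult_assoc, Rinv_l by lra. lra.
Qed.

Hypothesis Hconv : convex_real h.
Hypothesis Hgrad : frechet_gradient h gh.

Lemma grad_ineq x y : h y >= h x + inner (gh x) (vsub y x).
Proof.
  apply Rle_ge. set (d := vsub y x).
  apply (le_eps_mult _ _ (hnorm d) (hnorm_pos d)). intros e He.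
  destruct (Hgrad x e He) as [delta [Hdel Hf]].
  destruct (small_t d delta 1 Hdel ltac:(lra)) as [t [Ht0 [Ht1 [_ Htd]]]].
  specialize (Hf _ Htd).
  pose proof (Hconv y x t (h y) (h x) ltac:(lra) (Rle_refl _) (Rle_refl _)) as Hc.
  simpl in Hc. rewrite vsegment in Hc. fold d in Hc.
  rewrite inner_scal_r, hnorm_scal, (Rabs_right t) in Hf by lra.
  apply Rabs_le_b in Hf. destruct Hf as [Hf1 Hf2].
  assert (t * (h x + inner (gh x) d) <= t * (h y + e * hnorm d)) by lra.
  apply Rmult_le_reg_l in H0; lra.
Qed.

Lemma h_cont x e : 0 < e -> exists delta, 0 < delta /\
  forall y, hnorm (vsub y x) < delta -> Rabs (h y - h x) < e.
Proof.
  intros He. destruct (Hgrad x 1 ltac:(lra)) as [d1 [Hd1 Hf]].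
  set (K := hnorm (gh x) + 1). pose proof (hnorm_pos (gh x)).
  exists (Rmin d1 (e / (2 * K))). split.
  apply Rmin_glb_lt; auto. apply Rdiv_lt_0_compat; unfold K; lra.
  intros y Hy. specialize (Hf (vsub y x)).
  replace (vadd x (vsub y x)) with y in Hf by vext.
  assert (hnorm (vsub y x) < d1) by (pose proof (Rmin_l d1 (e/(2*K))); lra).
  assert (hnorm (vsub y x) < e / (2*K)) by (pose proof (Rmin_r d1 (e/(2*K))); lra).
  specialize (Hf H1). pose proof (cs (gh x) (vsub y x)).
  pose proof (hnorm_pos (vsub y x)).
  assert (hnorm (vsub y x) * K < e / 2).
  { apply Rlt_le_trans with (e / (2 * K) * K). apply Rmult_lt_compat_r. unfold K; lra. auto.
    unfold Rdiv. rewrite Rinv_mult, !Rmult_assoc, Rinv_l by (unfold K; lra). lra. }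
  unfold K in H5. apply Rabs_le_b in Hf. apply Rabs_le_b in H3.
  apply Rabs_def1; nra.
Qed.

Variable L : R.
Hypothesis HL : 0 <= L.
Hypothesis Hlip : lipschitz L gh.

Lemma descent_n x y n : (1 <= n)%nat ->
  h y <= h x + inner (gh x) (vsub y x) + L * inner (vsub y x) (vsub y x) * (INR n + 1) / (2 * INR n).
Proof.
  intros Hn. set (d := vsub y x). set (N := INR n).
  assert (HN: 1 <= N) by (unfold N; apply (le_INR 1%nat); auto).
  set (xm := fun m : nat => vadd x (vscal (INR m / N) d)).
  assert (Hind: forall m, h (xm m) - h x <= INR m / N * inner (gh x) d
            + L * inner d d * (INR m * (INR m + 1)) / (2 * N * N)).
  { induction m.
    - unfold xm. simpl. replace (vadd x (vscal (0 / N) d)) with x by (vexp; unfold Rdiv; ring).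
      unfold Rdiv; lra.
    - pose proof (grad_ineq (xm (S m)) (xm m)) as G.
      replace (vsub (xm m) (xm (S m))) with (vscal (- / N) d) in G
        by (unfold xm; rewrite S_INR; vexp; field; lra).
      rewrite inner_scal_r in G.
      assert (Hl: hnorm (vsub (gh (xm (S m))) (gh x)) <= L * (INR (S m) / N * hnorm d)).
      { eapply Rle_trans. apply Hlip. right. f_equal.
        replace (vsub (xm (S m)) x) with (vscal (INR (S m) / N) d) by (unfold xm; vext).
        rewrite hnorm_scal, Rabs_right. auto. apply Rle_ge; unfold Rdiv; apply Rmult_le_pos; [apply pos_INR|left; apply Rinv_0_lt_compat; lra]. }
      pose proof (cs' (vsub (gh (xm (S m))) (gh x)) d) as C.
      rewrite inner_sub_l in C.
      assert (C2: inner (gh (xm (S m))) d <= inner (gh x) d + L * (INR (S m) / N) * inner d d).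
      { rewrite <- hnorm_sq.
        assert (hnorm (vsub (gh (xm (S m))) (gh x)) * hnorm d <= L * (INR (S m) / N * hnorm d) * hnorm d)
          by (apply Rmult_le_compat_r; [apply hnorm_pos| auto]).
        lra. }
      rewrite S_INR in *.
      assert (Hpos: 0 < / N) by (apply Rinv_0_lt_compat; lra).
      assert (C3: / N * inner (gh (xm (S m))) d <= / N * (inner (gh x) d + L * ((INR m + 1) / N) * inner d d))
        by (apply Rmult_le_compat_l; lra).
      assert (E: (INR m + 1) / N * inner (gh x) d + L * inner d d * ((INR m + 1) * (INR m + 1 + 1)) / (2 * N * N)
        = INR m / N * inner (gh x) d + L * inner d d * (INR m * (INR m + 1)) / (2 * N * N)
          + / N * (inner (gh x) d + L * ((INR m + 1) / N) * inner d d)) by (field; lra).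
      rewrite E. lra. }
  specialize (Hind n). unfold xm in Hind. fold N in Hind.
  replace (vadd x (vscal (N / N) d)) with y in Hind by (unfold d; vexp; field; lra).
  assert (E: N / N * inner (gh x) d + L * inner d d * (N * (N + 1)) / (2 * N * N)
     = inner (gh x) d + L * inner d d * (N + 1) / (2 * N)) by (field; lra).
  lra.
Qed.

Lemma descent x y :
  h y <= h x + inner (gh x) (vsub y x) + L / 2 * inner (vsub y x) (vsub y x).
Proof.
  set (Q := L * inner (vsub y x) (vsub y x)).
  assert (HQ: 0 <= Q) by (unfold Q; apply Rmult_le_pos; auto; apply inner_pos).
  apply le_eps. intros e He.
  destruct (archimed_cor1 (e / (Q + 1))) as [n [Hn1 Hn0]].
  { apply Rdiv_lt_0_compat; lra. }
  pose proof (descent_n x y n Hn0). fold Q in H0.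
  assert (Hn: 0 < INR n) by (apply lt_0_INR; lia).
  assert (Q * (INR n + 1) / (2 * INR n) = Q / 2 + Q / (2 * INR n)) by (field; lra).
  assert (Q / (2 * INR n) <= e).
  { assert (/ INR n * (Q + 1) < e).
    { apply Rmult_lt_compat_r with (r := Q + 1) in Hn1; [|lra].
      unfold Rdiv in Hn1. rewrite Rmult_assoc, Rinv_l in Hn1 by lra. lra. }
    assert (Q / (2 * INR n) <= / INR n * (Q + 1)).
    { unfold Rdiv. rewrite Rinv_mult.
      assert (0 < / INR n) by (apply Rinv_0_lt_compat; lra). nra. }
    lra. }
  unfold Q in *. lra.
Qed.

(* Baillon-Haddad type *)
Lemma cocoercive_fun x y : 0 < L ->
  h y >= h x + inner (gh x) (vsub y x) + / (2 * L) * inner (vsub (gh y) (gh x)) (vsub (gh y) (gh x)).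
Proof.
  intro HL0. set (g := vsub (gh y) (gh x)).
  set (w := vsub y (vscal (/ L) g)).
  pose proof (grad_ineq x w) as G1. pose proof (descent y w) as D.
  replace (vsub w x) with (vsub (vsub y x) (vscal (/L) g)) in G1 by (unfold w; vext).
  replace (vsub w y) with (vscal (- / L) g) in D by (unfold w; vext).
  autorewrite with inE in G1, D.
  assert (inner (gh y) g = inner (gh x) g + inner g g) by (unfold g; autorewrite with inE; ring).
  apply Rle_ge.
  assert (E: / (2 * L) * inner g g = / L * inner g g - L / 2 * (- / L * (- / L * inner g g))) by (field; lra).
  rewrite E. autorewrite with inE in *. nra.
Qed.

Lemma cocoercive x y : 0 < L ->
  inner (vsub (gh x) (gh y)) (vsub x y) >= / L * inner (vsub (gh x) (gh y)) (vsub (gh x) (gh y)).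
Proof.
  intro HL0. pose proof (cocoercive_fun x y HL0). pose proof (cocoercive_fun y x HL0).
  replace (vsub (gh x) (gh y)) with (vopp (vsub (gh y) (gh x))) in * by vext.
  replace (vsub x y) with (vopp (vsub y x)) by vext.
  autorewrite with inE in *.
  assert (E: / L = / (2*L) + / (2*L)) by (field; lra). rewrite E. nra.
Qed.

Lemma three_point a b c :
  inner (vsub (gh a) (gh c)) (vsub b c) >= - (L / 4) * inner (vsub b a) (vsub b a).
Proof.
  destruct (Req_dec L 0) as [HL0|HL0].
  - assert (E: gh a = gh c).
    { specialize (Hlip a c). rewrite HL0, Rmult_0_l in Hlip.
      pose proof (hnorm_pos (vsub (gh a) (gh c))).
      assert (vsub (gh a) (gh c) = vzero) by (apply hnorm_eq0; lra).
      apply inner_ext; intro w. assert (inner (vsub (gh a) (gh c)) w = 0) by (rewrite H1; apply inner_0_l).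
      autorewrite with inE in H2. lra. }
    rewrite E, vsub_diag, inner_0_l, HL0. pose proof (inner_pos (vsub b a)). lra.
  - assert (HLp: 0 < L) by lra.
    set (g := vsub (gh a) (gh c)).
    pose proof (cocoercive a c HLp) as Co. fold g in Co.
    replace (vsub b c) with (vadd (vsub a c) (vsub b a)) by vext.
    rewrite inner_add_r.
    pose proof (young_inner g (vsub b a) (2 / L) ltac:(apply Rdiv_lt_0_compat; lra)).
    apply Rabs_le_b in H0. destruct H0.
    replace (2 / L / 2) with (/ L) in * by (field; lra).
    replace (/ (2 * (2 / L))) with (L / 4) in * by (field; lra). lra.
Qed.

End H1.

Lemma ERle_fin x r : ERle x (Fin r) -> exists v, x = Fin v /\ v <= r.
Proof. destruct x; simpl; intros; [eauto|contradiction]. Qed.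
Lemma ERle_trans x y z : ERle x y -> ERle y z -> ERle x z.
Proof. destruct x, y, z; simpl; intros; auto; lra. Qed.
Lemma ERle_fin_mono x r r' : ERle x (Fin r) -> r <= r' -> ERle x (Fin r').
Proof. destruct x; simpl; intros; auto; lra. Qed.
Lemma ERaddR_assoc x a b : ERaddR (ERaddR x a) b = ERaddR x (a + b).
Proof. destruct x; simpl; auto. f_equal; ring. Qed.
Lemma ERle_addR x y c : ERle x y -> ERle (ERaddR x c) (ERaddR y c).
Proof. destruct x, y; simpl; intros; auto; lra. Qed.
Lemma ERle_addR_inv x y c : ERle (ERaddR x c) (ERaddR y c) -> ERle x y.
Proof. destruct x, y; simpl; intros; auto; lra. Qed.
Lemma ERle_refl x : ERle x x.
Proof. destruct x; simpl; auto; lra. Qed.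

Section Lin.
Context {H1 H2 : Hilbert}.
Variable T : H1 -> H2.
Hypothesis HT : linear_op T.
Lemma lin_add x y : T (vadd x y) = vadd (T x) (T y).
Proof. apply HT. Qed.
Lemma lin_scal a x : T (vscal a x) = vscal a (T x).
Proof. apply HT. Qed.
Lemma lin_0 : T vzero = vzero.
Proof. rewrite <- (vscal_0 vzero), lin_scal, vscal_0. reflexivity. Qed.
Lemma lin_opp x : T (vopp x) = vopp (T x).
Proof.
  replace (vopp x) with (vscal (-1) x) by vext. rewrite lin_scal. vext.
Qed.
Lemma lin_sub x y : T (vsub x y) = vsub (T x) (T y).
Proof. unfold vsub. rewrite lin_add, lin_opp. reflexivity. Qed.
End Lin.

Lemma bl_lin {H1 H2 : Hilbert} (T : H1 -> H2) : bounded_linear T -> linear_op T.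
Proof. intros [h _]; exact h. Qed.

Lemma bl_bound {H1 H2 : Hilbert} (T : H1 -> H2) : bounded_linear T ->
  exists C, 0 <= C /\ forall x, hnorm (T x) <= C * hnorm x.
Proof.
  intros [_ [C HC]]. exists (Rabs C). split. apply Rabs_pos.
  intro x. eapply Rle_trans. apply HC. apply Rmult_le_compat_r. apply hnorm_pos. apply Rle_abs.
Qed.

Lemma opnorm_bound {H1 H2 : Hilbert} (T : H1 -> H2) n : linear_op T -> opnorm_is T n ->
  forall x, hnorm (T x) <= n * hnorm x.
Proof.
  intros HT [Hub _] x. destruct (Req_dec (hnorm x) 0) as [E|E].
  - apply hnorm_eq0 in E. subst x. rewrite (lin_0 T HT), !hnorm_0. right; ring.
  - pose proof (hnorm_pos x).
    assert (Hu: hnorm (vscal (/ hnorm x) x) <= 1).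
    { rewrite hnorm_scal, Rabs_right. rewrite Rinv_l; lra.
      left; apply Rinv_0_lt_compat; lra. }
    specialize (Hub _ (ex_intro _ _ (conj Hu eq_refl))).
    rewrite (lin_scal T HT), hnorm_scal, Rabs_right in Hub by (left; apply Rinv_0_lt_compat; lra).
    apply Rmult_le_compat_r with (r := hnorm x) in Hub; [|lra].
    rewrite (Rmult_comm (/ _)), Rmult_assoc, Rinv_l in Hub by lra. lra.
Qed.

Lemma opnorm_pos {H1 H2 : Hilbert} (T : H1 -> H2) n : linear_op T -> opnorm_is T n ->
  (exists u, T u <> vzero) -> 0 < n.
Proof.
  intros HT Hn [u Hu]. pose proof (opnorm_bound T n HT Hn u).
  assert (hnorm (T u) <> 0) by (intro E; apply Hu, hnorm_eq0, E).
  pose proof (hnorm_pos (T u)). pose proof (hnorm_pos u).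
  destruct (Rle_lt_dec n 0); auto. exfalso. nra.
Qed.

Section Op.
Context {H : Hilbert}.
Definition symm (T : H -> H) := forall x y, inner (T x) y = inner x (T y).

Lemma psd_cs (T : H -> H) C : 0 <= C -> linear_op T -> symm T -> (forall x, 0 <= inner x (T x)) ->
  (forall x, inner x (T x) <= C * inner x x) ->
  forall d, inner (T d) (T d) <= C * inner d (T d).
Proof.
  intros HC0 HT HS Hp HC d.
  assert (Q: forall x y, inner x (T y) ^ 2 <= inner x (T x) * inner y (T y)).
  { intros x y. apply quad_disc. intro t. pose proof (Hp (vadd x (vscal t y))).
    rewrite (lin_add T HT), (lin_scal T HT) in H0. autorewrite with inE in H0.
    rewrite (inner_sym y (T x)), (HS x y) in H0. nra. }
  specialize (Q d (T d)). rewrite <- HS in Q. 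
  pose proof (HC (T d)). pose proof (Hp d). pose proof (inner_pos (T d)).
  destruct (Req_dec (inner (T d) (T d)) 0) as [E|E].
  - rewrite E. apply Rmult_le_pos; auto.
  - assert (inner (T d) (T d) ^ 2 <= inner d (T d) * (C * inner (T d) (T d))).
    { eapply Rle_trans. apply Q. apply Rmult_le_compat_l; auto. }
    assert (0 < inner (T d) (T d)) by lra.
    apply Rmult_le_reg_r with (inner (T d) (T d)); auto. nra.
Qed.
End Op.

Section MSeq.
Context {H : Hilbert}.
Variable M : nat -> H -> H.
Hypothesis HMs : forall k, in_Splus (M k).
Hypothesis HMd : forall k, loewner_ge (M k) (M (S k)).

Lemma M_lin k : linear_op (M k).
Proof. destruct (HMs k) as [[h _] _]; exact h. Qed.
Lemma M_symm k : symm (M k).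
Proof. destruct (HMs k) as [_ [h _]]; exact h. Qed.
Lemma M_pos k x : 0 <= Mnorm2 (M k) x.
Proof. destruct (HMs k) as [_ [_ h]]; apply h. Qed.

Lemma M_mono m k : (m <= k)%nat -> forall x, Mnorm2 (M k) x <= Mnorm2 (M m) x.
Proof.
  induction 1; intro x. lra. specialize (HMd m0 x). specialize (IHle x). lra.
Qed.

Lemma M_unif : exists C, 0 <= C /\ forall k x, Mnorm2 (M k) x <= C * inner x x.
Proof.
  destruct (HMs 0%nat) as [Hb _]. destruct (bl_bound _ Hb) as [C [HC HCb]].
  exists C. split; auto. intros k x.
  eapply Rle_trans. apply (M_mono 0 k ltac:(lia)).
  unfold Mnorm2. eapply Rle_trans. apply cs'. rewrite <- hnorm_sq.
  pose proof (HCb x). pose proof (hnorm_pos x).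
  replace (C * (hnorm x * hnorm x)) with (hnorm x * (C * hnorm x)) by ring.
  apply Rmult_le_compat_l; auto.
Qed.

Lemma M_bound : exists C, 0 <= C /\ forall k d, hnorm (M k d) <= C * hnorm d.
Proof.
  destruct M_unif as [C [HC HCb]]. exists C. split; auto. intros k d.
  pose proof (psd_cs (M k) C HC (M_lin k) (M_symm k) (M_pos k) (HCb k) d).
  apply Rsqr_incr_0_var. unfold Rsqr.
  replace (C * hnorm d * (C * hnorm d)) with (C * C * (hnorm d * hnorm d)) by ring.
  rewrite !hnorm_sq.
  eapply Rle_trans. apply H0. unfold Mnorm2 in HCb. specialize (HCb k d).
  replace (C * C * inner d d) with (C * (C * inner d d)) by ring.
  apply Rmult_le_compat_l; auto.
  apply Rmult_le_pos; auto; apply hnorm_pos.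
Qed.

Lemma M_diff : exists C, 0 <= C /\ forall m k, (m <= k)%nat -> forall d,
  inner (vsub (M m d) (M k d)) (vsub (M m d) (M k d)) <= C * (Mnorm2 (M m) d - Mnorm2 (M k) d).
Proof.
  destruct M_unif as [C [HC HCb]]. exists C. split; auto. intros m k Hmk d.
  set (T := fun x => vsub (M m x) (M k x)).
  assert (HT: linear_op T).
  { split; intros; unfold T; rewrite ?(lin_add _ (M_lin m)), ?(lin_add _ (M_lin k)),
      ?(lin_scal _ (M_lin m)), ?(lin_scal _ (M_lin k)); vext. }
  assert (HS: symm T).
  { intros x y. unfold T. autorewrite with inE. rewrite !M_symm. ring. }
  assert (Hp: forall x, 0 <= inner x (T x)).
  { intro x. unfold T. autorewrite with inE. pose proof (M_mono m k Hmk x). unfold Mnorm2 in *. lra. }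
  assert (Hc: forall x, inner x (T x) <= C * inner x x).
  { intro x. unfold T. autorewrite with inE. pose proof (HCb m x). pose proof (M_pos k x).
    unfold Mnorm2 in *. lra. }
  pose proof (psd_cs T C HC HT HS Hp Hc d). unfold T, Mnorm2 in *.
  autorewrite with inE in *. lra.
Qed.
End MSeq.

Section VI.
Context {H : Hilbert}.

Definition sconv (mu : R) (F : H -> ER) := forall w y t a b, 0 <= t <= 1 ->
  ERle (F w) (Fin a) -> ERle (F y) (Fin b) ->
  ERle (F (vadd (vscal t w) (vscal (1 - t) y)))
       (Fin (t * a + (1 - t) * b - mu / 2 * (t * (1 - t)) * inner (vsub w y) (vsub w y))).

Lemma sconv_convex F : convex F -> sconv 0 F.
Proof.
  intros HF w y t a b Ht Ha Hb. eapply ERle_fin_mono. apply HF; eauto. lra.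
Qed.

Lemma sconv_strong F g : strongly_convex g F -> sconv g F.
Proof.
  intros HF w y t a b Ht Ha Hb.
  set (u := vadd (vscal t w) (vscal (1 - t) y)).
  specialize (HF w y t (a - g/2 * hnorm w ^ 2) (b - g/2 * hnorm y ^ 2) Ht).
  fold u in HF.
  assert (ERle (ERaddR (F w) (- (g / 2) * hnorm w ^ 2)) (Fin (a - g / 2 * hnorm w ^ 2))).
  { destruct (F w); simpl in *; auto; lra. }
  assert (ERle (ERaddR (F y) (- (g / 2) * hnorm y ^ 2)) (Fin (b - g / 2 * hnorm y ^ 2))).
  { destruct (F y); simpl in *; auto; lra. }
  specialize (HF H0 H1). rewrite !hnorm2 in HF.
  assert (E: inner u u = t * t * inner w w + 2 * t * (1-t) * inner w y + (1-t)*(1-t) * inner y y).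
  { unfold u. autorewrite with inE. rewrite (inner_sym y w). ring. }
  destruct (F u); simpl in *; auto. autorewrite with inE.
  rewrite (inner_sym y w). rewrite E in HF. nra.
Qed.

Lemma argmin_vi (F : H -> ER) (Q : H -> R) mu xp Fx (l : H -> R) :
  0 <= mu -> F xp = Fin Fx -> sconv mu F ->
  (forall u, ERle (ERaddR (F xp) (Q xp)) (ERaddR (F u) (Q u))) ->
  (forall d eta tau, 0 < eta -> 0 < tau -> exists t, 0 < t /\ t <= 1 /\ t <= tau /\
      Q (vadd xp (vscal t d)) - Q xp <= t * (l d + eta)) ->
  forall w a, ERle (F w) (Fin a) ->
    a >= Fx - l (vsub w xp) + mu / 2 * inner (vsub w xp) (vsub w xp).
Proof.
  intros Hmu HFx Hsc Hmin HQ w a Hw. set (d := vsub w xp).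
  set (n := inner d d). assert (Hn: 0 <= n) by apply inner_pos.
  apply Rle_ge. apply (le_eps_mult _ _ (1 + mu / 2 * n)). nra.
  intros e He.
  destruct (HQ d e e He He) as [t [Ht0 [Ht1 [Hte Ht]]]].
  assert (HFxp: ERle (F xp) (Fin Fx)) by (rewrite HFx; simpl; lra).
  pose proof (Hsc w xp t a Fx ltac:(lra) Hw HFxp) as Hs.
  rewrite (vsegment xp w t) in Hs. fold d in Hs. fold n in Hs.
  specialize (Hmin (vadd xp (vscal t d))). rewrite HFx in Hmin.
  destruct (F (vadd xp (vscal t d))) as [fu|]; simpl in Hs, Hmin; [|contradiction].
  assert (t * (a - Fx - mu / 2 * (1 - t) * n + l d + e) >= 0) by nra.
  assert (a - Fx - mu / 2 * (1 - t) * n + l d + e >= 0).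
  { destruct (Rle_lt_dec 0 (a - Fx - mu / 2 * (1 - t) * n + l d + e)); [lra|].
    exfalso. assert (t * (a - Fx - mu / 2 * (1 - t) * n + l d + e) < 0). 
    apply Rmult_pos_neg; lra. lra. }
  assert (mu / 2 * t * n <= e * (mu / 2 * n)).
  { replace (mu / 2 * t * n) with (t * (mu / 2 * n)) by ring.
    apply Rmult_le_compat_r; auto. apply Rmult_le_pos; lra. }
  nra.
Qed.

Lemma quad_Q (Q : H -> R) xp (l q : H -> R) :
  (forall d t, Q (vadd xp (vscal t d)) = Q xp + t * l d + t ^ 2 * q d) ->
  forall d eta tau, 0 < eta -> 0 < tau -> exists t, 0 < t /\ t <= 1 /\ t <= tau /\
      Q (vadd xp (vscal t d)) - Q xp <= t * (l d + eta).
Proof.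
  intros HQ d eta tau He Ht.
  set (t := Rmin (Rmin 1 tau) (eta / (Rabs (q d) + 1))).
  pose proof (Rabs_pos (q d)).
  assert (0 < eta / (Rabs (q d) + 1)) by (apply Rdiv_lt_0_compat; lra).
  assert (Hm1: t <= Rmin 1 tau) by apply Rmin_l.
  pose proof (Rmin_l 1 tau). pose proof (Rmin_r 1 tau).
  assert (Hm2: t <= eta / (Rabs (q d) + 1)) by apply Rmin_r.
  assert (0 < t) by (unfold t; repeat apply Rmin_glb_lt; lra).
  exists t. repeat split; try lra.
  rewrite HQ. 
  assert (t * q d <= eta).
  { assert (E: eta / (Rabs (q d) + 1) * (Rabs (q d) + 1) = eta) by (field; lra).
    assert (t * q d <= t * Rabs (q d)) by (apply Rmult_le_compat_l; [lra| apply Rle_abs]).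
    assert (t * Rabs (q d) <= eta / (Rabs (q d) + 1) * Rabs (q d)) by (apply Rmult_le_compat_r; lra).
    assert (eta / (Rabs (q d) + 1) * Rabs (q d) <= eta / (Rabs (q d) + 1) * (Rabs (q d) + 1))
      by (apply Rmult_le_compat_l; lra).
    lra. }
  nra.
Qed.

Lemma diff_Q (h : H -> R) gh (c : H -> R) xp :
  frechet_gradient h gh ->
  (forall d t, c (vadd xp (vscal t d)) = c xp + t * c d) ->
  forall d eta tau, 0 < eta -> 0 < tau -> exists t, 0 < t /\ t <= 1 /\ t <= tau /\
      (h (vadd xp (vscal t d)) + c (vadd xp (vscal t d))) - (h xp + c xp)
      <= t * ((inner (gh xp) d + c d) + eta).
Proof.
  intros Hg Hc d eta tau He Ht.
  set (e' := eta / (hnorm d + 1)). pose proof (hnorm_pos d).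
  assert (He': 0 < e') by (apply Rdiv_lt_0_compat; lra).
  destruct (Hg xp e' He') as [delta [Hdel Hf]].
  destruct (small_t d delta tau Hdel Ht) as [t [Ht0 [Ht1 [Htt Htd]]]].
  exists t. repeat split; auto.
  specialize (Hf _ Htd). rewrite inner_scal_r, hnorm_scal, (Rabs_right t) in Hf by lra.
  apply Rabs_le_b in Hf. rewrite Hc.
  assert (e' * (t * hnorm d) <= t * eta).
  { unfold e'. replace (eta / (hnorm d + 1) * (t * hnorm d)) with (t * (eta * (hnorm d / (hnorm d + 1))))
     by (field; lra). apply Rmult_le_compat_l; [lra|].
    rewrite <- (Rmult_1_r eta) at 2. apply Rmult_le_compat_l; [lra|].
    apply Rmult_le_reg_r with (hnorm d + 1); [lra|]. unfold Rdiv. rewrite Rmult_assoc, Rinv_l; lra. }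
  lra.
Qed.

End VI.

Lemma ERadd_l X a y : ERadd (ERaddR X a) (Fin y) = ERaddR X (a + y).
Proof. destruct X; simpl; auto. f_equal; ring. Qed.
Lemma ERadd_r X a y : ERadd (Fin y) (ERaddR X a) = ERaddR X (y + a).
Proof. destruct X; simpl; auto. f_equal; ring. Qed.

Section Saddle.
Context {H G K : Hilbert}.
Variables (f : H -> ER) (g : G -> ER) (h1 : H -> R) (h2 : G -> R) (gh1 : H -> H) (gh2 : G -> G)
  (gamma : R) (A : H -> K) (B : G -> K) (b : K).
Hypothesis Hgam : 0 <= gamma.
Hypothesis Hfp : proper f.
Hypothesis Hgp : proper g.
Hypothesis Hfsc : sconv gamma f.
Hypothesis Hgc : sconv 0 g.
Hypothesis Hh1g : frechet_gradient h1 gh1.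
Hypothesis Hh2g : frechet_gradient h2 gh2.
Hypothesis HA : linear_op A.
Hypothesis HB : linear_op B.

Variables (xs : H) (zs : G) (ps : K).
Hypothesis Hs : saddle_point f h1 g h2 A B b xs zs ps.

Lemma saddle_fin : exists fs gs, f xs = Fin fs /\ g zs = Fin gs.
Proof.
  destruct Hfp as [x0 Hx0]. destruct Hgp as [z0 Hz0].
  destruct (Hs x0 z0 ps) as [_ Hle]. unfold Lagr in Hle.
  destruct (f x0) as [a0|]; [|congruence]. destruct (g z0) as [b0|]; [|congruence].
  destruct (f xs) as [fs|]; destruct (g zs) as [gs|]; simpl in Hle; try contradiction.
  eauto.
Qed.

Lemma saddle_feas : vsub (vsub b (A xs)) (B zs) = vzero.
Proof.
  destruct saddle_fin as [fs [gs [E1 E2]]].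
  set (r := vsub (vsub b (A xs)) (B zs)).
  destruct (Hs xs zs (vadd ps r)) as [Hle _]. unfold Lagr in Hle. rewrite E1, E2 in Hle.
  simpl in Hle. fold r in Hle. rewrite inner_add_l in Hle.
  apply inner_def. pose proof (inner_pos r). lra.
Qed.

Lemma saddle_x : exists fs, f xs = Fin fs /\ forall w a, ERle (f w) (Fin a) ->
  a >= fs + inner ps (A (vsub w xs)) - inner (gh1 xs) (vsub w xs)
        + gamma / 2 * inner (vsub w xs) (vsub w xs).
Proof.
  destruct saddle_fin as [fs [gs [E1 E2]]]. exists fs. split; auto.
  intros w a Hw.
  set (Q := fun u => h1 u + (fun u => - inner ps (A u)) u).
  assert (Hmin: forall u, ERle (ERaddR (f xs) (Q xs)) (ERaddR (f u) (Q u))).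
  { intro u. destruct (Hs u zs ps) as [_ Hle]. unfold Lagr in Hle. rewrite E2 in Hle.
    change (ERaddR (Fin gs) (h2 zs)) with (Fin (gs + h2 zs)) in Hle. rewrite !ERadd_l, !ERaddR_assoc in Hle.
    apply (ERle_addR_inv _ _ (gs + h2 zs + inner ps b - inner ps (B zs))).
    rewrite !ERaddR_assoc. 
    replace (Q xs + (gs + h2 zs + inner ps b - inner ps (B zs))) with
       (h1 xs + (gs + h2 zs) + inner ps (vsub (vsub b (A xs)) (B zs)))
      by (unfold Q; autorewrite with inE; ring).
    replace (Q u + (gs + h2 zs + inner ps b - inner ps (B zs))) with
       (h1 u + (gs + h2 zs) + inner ps (vsub (vsub b (A u)) (B zs)))
      by (unfold Q; autorewrite with inE; ring).
    exact Hle. }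
  pose proof (argmin_vi f Q gamma xs fs (fun d => inner (gh1 xs) d + - inner ps (A d)) Hgam E1 Hfsc Hmin) as V.
  assert (HQ: forall d eta tau, 0 < eta -> 0 < tau -> exists t, 0 < t /\ t <= 1 /\ t <= tau /\
      Q (vadd xs (vscal t d)) - Q xs <= t * ((fun d => inner (gh1 xs) d + - inner ps (A d)) d + eta)).
  { intros d eta tau He Ht. unfold Q.
    destruct (diff_Q h1 gh1 (fun u => - inner ps (A u)) xs Hh1g) with (d := d) (eta := eta) (tau := tau)
      as [t Ht']; auto.
    intros d' t'. rewrite (lin_add A HA), (lin_scal A HA). autorewrite with inE. ring.
    exists t. simpl. lra. }
  specialize (V HQ w a Hw). simpl in V. lra.
Qed.

Lemma saddle_z : exists gs, g zs = Fin gs /\ forall v a, ERle (g v) (Fin a) ->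
  a >= gs + inner ps (B (vsub v zs)) - inner (gh2 zs) (vsub v zs).
Proof.
  destruct saddle_fin as [fs [gs [E1 E2]]]. exists gs. split; auto.
  intros v a Hv.
  set (Q := fun u => h2 u + (fun u => - inner ps (B u)) u).
  assert (Hmin: forall u, ERle (ERaddR (g zs) (Q zs)) (ERaddR (g u) (Q u))).
  { intro u. destruct (Hs xs u ps) as [_ Hle]. unfold Lagr in Hle. rewrite E1 in Hle.
    change (ERaddR (Fin fs) (h1 xs)) with (Fin (fs + h1 xs)) in Hle. rewrite !ERadd_r, !ERaddR_assoc in Hle.
    apply (ERle_addR_inv _ _ (fs + h1 xs + inner ps b - inner ps (A xs))).
    rewrite !ERaddR_assoc. 
    replace (Q zs + (fs + h1 xs + inner ps b - inner ps (A xs))) with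
       (fs + h1 xs + h2 zs + inner ps (vsub (vsub b (A xs)) (B zs)))
      by (unfold Q; autorewrite with inE; ring).
    replace (Q u + (fs + h1 xs + inner ps b - inner ps (A xs))) with
       (fs + h1 xs + h2 u + inner ps (vsub (vsub b (A xs)) (B u)))
      by (unfold Q; autorewrite with inE; ring).
    exact Hle. }
  pose proof (argmin_vi g Q 0 zs gs (fun d => inner (gh2 zs) d + - inner ps (B d)) (Rle_refl 0) E2 Hgc Hmin) as V.
  assert (HQ: forall d eta tau, 0 < eta -> 0 < tau -> exists t, 0 < t /\ t <= 1 /\ t <= tau /\
      Q (vadd zs (vscal t d)) - Q zs <= t * ((fun d => inner (gh2 zs) d + - inner ps (B d)) d + eta)).
  { intros d eta tau He Ht. unfold Q.
    destruct (diff_Q h2 gh2 (fun u => - inner ps (B u)) zs Hh2g) with (d := d) (eta := eta) (tau := tau)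
      as [t Ht']; auto.
    intros d' t'. rewrite (lin_add B HB), (lin_scal B HB). autorewrite with inE. ring.
    exists t. simpl. lra. }
  specialize (V HQ v a Hv). simpl in V. pose proof (inner_pos (vsub v zs)). lra.
Qed.

End Saddle.

Section Steps.
Context {H G K : Hilbert}.
Variables (f : H -> ER) (g : G -> ER) (gh1 : H -> H) (gh2 : G -> G)
  (gamma : R) (A : H -> K) (B : G -> K) (b : K)
  (M1 : nat -> H -> H) (M2 : nat -> G -> G) (c : nat -> R)
  (x : nat -> H) (z : nat -> G) (p : nat -> K).
Hypothesis Hgam : 0 <= gamma.
Hypothesis Hfp : proper f.
Hypothesis Hgp : proper g.
Hypothesis Hfsc : sconv gamma f.
Hypothesis Hgc : sconv 0 g.
Hypothesis HA : linear_op A.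
Hypothesis HB : linear_op B.
Hypothesis HM1 : forall k, linear_op (M1 k).
Hypothesis HM2 : forall k, linear_op (M2 k).
Hypothesis Hiter : prox_AMA f g gh1 gh2 A B b M1 M2 c x z p.

Lemma fin_of_min {T : Hilbert} (F : T -> ER) (Q : T -> R) xp : proper F ->
  (forall u, ERle (ERaddR (F xp) (Q xp)) (ERaddR (F u) (Q u))) -> exists v, F xp = Fin v.
Proof.
  intros [u0 Hu0] Hm. specialize (Hm u0). destruct (F u0); [|congruence].
  destruct (F xp); simpl in Hm; [eauto|contradiction].
Qed.

Lemma step_x k : exists fx1, f (x (S k)) = Fin fx1 /\ forall w a, ERle (f w) (Fin a) ->
  a >= fx1 + inner (p k) (A (vsub w (x (S k)))) - inner (gh1 (x k)) (vsub w (x (S k)))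
     - / 2 * (inner (vsub (x (S k)) (x k)) (M1 k (vsub w (x (S k))))
              + inner (vsub w (x (S k))) (M1 k (vsub (x (S k)) (x k))))
     + gamma / 2 * inner (vsub w (x (S k))) (vsub w (x (S k))).
Proof.
  destruct (Hiter k) as [Hx _].
  set (Q := fun u => - inner (p k) (A u) + inner (vsub u (x k)) (gh1 (x k))
               + / 2 * Mnorm2 (M1 k) (vsub u (x k))).
  change (forall u, ERle (ERaddR (f (x (S k))) (Q (x (S k)))) (ERaddR (f u) (Q u))) in Hx.
  destruct (fin_of_min f Q _ Hfp Hx) as [fx1 E]. exists fx1. split; auto.
  set (e := vsub (x (S k)) (x k)).
  set (l := fun d => - inner (p k) (A d) + inner d (gh1 (x k))
              + / 2 * (inner e (M1 k d) + inner d (M1 k e))).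
  set (q := fun d => / 2 * inner d (M1 k d)).
  assert (HQ: forall d t, Q (vadd (x (S k)) (vscal t d)) = Q (x (S k)) + t * l d + t ^ 2 * q d).
  { intros d t. unfold Q, l, q, Mnorm2.
    replace (vsub (vadd (x (S k)) (vscal t d)) (x k)) with (vadd e (vscal t d)) by (unfold e; vext).
    fold e. rewrite (lin_add _ (HM1 k)), (lin_scal _ (HM1 k)), (lin_add _ HA), (lin_scal _ HA).
    unfold e. autorewrite with inE. ring. }
  intros w a Hw.
  pose proof (argmin_vi f Q gamma (x (S k)) fx1 l Hgam E Hfsc Hx (quad_Q Q _ l q HQ) w a Hw).
  unfold l in H0. rewrite (inner_sym (vsub w (x (S k))) (gh1 (x k))) in H0. fold e. lra.
Qed.

Lemma step_z k : exists gz1, g (z (S k)) = Fin gz1 /\ forall v a, ERle (g v) (Fin a) ->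
  a >= gz1 + inner (p (S k)) (B (vsub v (z (S k)))) - inner (gh2 (z k)) (vsub v (z (S k)))
     - / 2 * (inner (vsub (z (S k)) (z k)) (M2 k (vsub v (z (S k))))
              + inner (vsub v (z (S k))) (M2 k (vsub (z (S k)) (z k)))).
Proof.
  destruct (Hiter k) as [_ [Hz Hp]].
  set (Q := fun v => - inner (p k) (B v)
               + c k / 2 * (hnorm (vsub (vadd (A (x (S k))) (B v)) b)) ^ 2
               + inner (vsub v (z k)) (gh2 (z k))
               + / 2 * Mnorm2 (M2 k) (vsub v (z k))).
  change (forall u, ERle (ERaddR (g (z (S k))) (Q (z (S k)))) (ERaddR (g u) (Q u))) in Hz.
  destruct (fin_of_min g Q _ Hgp Hz) as [gz1 E]. exists gz1. split; auto.
  set (e := vsub (z (S k)) (z k)).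
  set (r := vsub (vadd (A (x (S k))) (B (z (S k)))) b).
  set (l := fun d => - inner (p k) (B d) + c k * inner r (B d) + inner d (gh2 (z k))
              + / 2 * (inner e (M2 k d) + inner d (M2 k e))).
  set (q := fun d => c k / 2 * inner (B d) (B d) + / 2 * inner d (M2 k d)).
  assert (HQ: forall d t, Q (vadd (z (S k)) (vscal t d)) = Q (z (S k)) + t * l d + t ^ 2 * q d).
  { intros d t. unfold Q, l, q, Mnorm2. rewrite !hnorm2.
    replace (vsub (vadd (z (S k)) (vscal t d)) (z k)) with (vadd e (vscal t d)) by (unfold e; vext).
    replace (vsub (vadd (A (x (S k))) (B (vadd (z (S k)) (vscal t d)))) b) with
       (vadd r (vscal t (B d))) by (unfold r; rewrite (lin_add _ HB), (lin_scal _ HB); vext).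
    fold e. fold r. rewrite (lin_add _ (HM2 k)), (lin_scal _ (HM2 k)), (lin_add _ HB), (lin_scal _ HB).
    unfold e, r. autorewrite with inE. rewrite (inner_sym (B d) (A (x (S k)))), (inner_sym (B d) (B (z (S k)))), (inner_sym (B d) b). field. }
  intros v a Hv.
  pose proof (argmin_vi g Q 0 (z (S k)) gz1 l (Rle_refl 0) E Hgc Hz (quad_Q Q _ l q HQ) v a Hv).
  unfold l in H0. rewrite (inner_sym (vsub v (z (S k))) (gh2 (z k))) in H0. fold e.
  rewrite Hp. unfold r in H0. autorewrite with inE in *. 
  pose proof (inner_pos (vsub v (z (S k)))). autorewrite with inE in H1.
  replace (0 / 2) with 0 in H0 by field. lra.
Qed.
End Steps.

Lemma core_c_bound gamma nA eps c : 0 < gamma -> 0 < nA -> 0 < eps -> eps * nA ^ 2 < gamma ->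
  c <= 2 * gamma / nA ^ 2 - eps -> 0 <= c ->
  c * nA ^ 2 / (1 - eps * nA ^ 2 / (4 * gamma)) <= 2 * gamma - eps * nA ^ 2 / 2.
Proof.
  intros Hg Hn He Hen Hc Hc0. set (a := eps * nA ^ 2) in *.
  assert (Hn2: 0 < nA ^ 2) by (apply pow_lt; lra).
  assert (Ha: 0 < a) by (unfold a; apply Rmult_lt_0_compat; lra).
  assert (Hca: c * nA ^ 2 <= 2 * gamma - a).
  { apply Rmult_le_compat_r with (r := nA ^ 2) in Hc; [|lra].
    replace ((2 * gamma / nA ^ 2 - eps) * nA ^ 2) with (2 * gamma - a) in Hc by (unfold a; field; lra).
    lra. }
  assert (Ht: 3/4 < 1 - a / (4 * gamma)).
  { assert (a / (4 * gamma) < 1/4). 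
    { apply Rmult_lt_reg_r with (4 * gamma); [lra|]. unfold Rdiv. rewrite Rmult_assoc, Rinv_l; lra. }
    lra. }
  apply Rmult_le_reg_r with (1 - a / (4 * gamma)); [lra|].
  unfold Rdiv at 1. rewrite Rmult_assoc, Rinv_l, Rmult_1_r by lra.
  assert ((2 * gamma - a / 2) * (1 - a / (4 * gamma)) = 2 * gamma - a + a * a / (8 * gamma)) by (field; lra).
  rewrite H. assert (0 <= a * a / (8 * gamma)).
  { unfold Rdiv. apply Rmult_le_pos. nra. left; apply Rinv_0_lt_compat; lra. }
  lra.
Qed.

Lemma core_fejer gamma nA eps c L1 L2 N0 N1 Pr Rr X Y T1 T2 Ux Vx Wx Ex Uz Vz Wz Ez :
  0 < gamma -> 0 < nA -> 0 < eps -> eps * nA ^ 2 < gamma ->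
  eps <= c -> c <= 2 * gamma / nA ^ 2 - eps -> 0 <= Rr -> 0 <= X ->
  0 >= Pr + c * Y + T1 + / 2 * (Ux + Wx - Vx) + T2 + / 2 * (Uz + Wz - Vz) + gamma * X ->
  2 * c * Pr = N1 - N0 + c ^ 2 * Rr ->
  (forall th, 0 < th -> Y >= - (th / 2 * Rr + nA ^ 2 / (2 * th) * X)) ->
  T1 >= - (L1 / 4) * Ex -> T2 >= - (L2 / 4) * Ez ->
  N1 + c * Ux + c * Uz + Rmin (eps ^ 2 * nA ^ 2 / 2) (eps ^ 3 * nA ^ 2 / (4 * gamma)) * (X + Rr)
   + c * (Wx - L1 / 2 * Ex) + c * (Wz - L2 / 2 * Ez) <= N0 + c * Vx + c * Vz.
Proof.
  intros Hg Hn He Hen Hc1 Hc2 HR HX H1 H2 HY HT1 HT2.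
  set (th := 1 - eps * nA ^ 2 / (4 * gamma)).
  assert (Hn2: 0 < nA ^ 2) by (apply pow_lt; lra).
  assert (Hs: 0 < eps * nA ^ 2 / (4 * gamma)) by (apply Rdiv_lt_0_compat; nra).
  assert (Hs2: eps * nA ^ 2 / (4 * gamma) < 1/4).
  { apply Rmult_lt_reg_r with (4 * gamma); [lra|]. unfold Rdiv. rewrite Rmult_assoc, Rinv_l; lra. }
  assert (Hth: 0 < th) by (unfold th; lra).
  specialize (HY th Hth).
  pose proof (core_c_bound gamma nA eps c Hg Hn He Hen Hc2 ltac:(lra)) as CB. fold th in CB.
  assert (Hc0: 0 < c) by lra.
  set (kap := Rmin (eps ^ 2 * nA ^ 2 / 2) (eps ^ 3 * nA ^ 2 / (4 * gamma))).
  set (S1 := Pr + c * Y + T1 + / 2 * (Ux + Wx - Vx) + T2 + / 2 * (Uz + Wz - Vz) + gamma * X).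
  assert (K1: 2 * c * S1 <= 0).
  { assert (2 * c * S1 <= 2 * c * 0) by (apply Rmult_le_compat_l; unfold S1; lra). lra. }
  assert (K2: c ^ 2 * Y >= c ^ 2 * (- (th / 2 * Rr + nA ^ 2 / (2 * th) * X))).
  { apply Rle_ge, Rmult_le_compat_l. nra. lra. }
  assert (K3: c * T1 >= c * (- (L1 / 4) * Ex)) by (apply Rle_ge, Rmult_le_compat_l; lra).
  assert (K4: c * T2 >= c * (- (L2 / 4) * Ez)) by (apply Rle_ge, Rmult_le_compat_l; lra).
  assert (K5: kap * Rr <= c ^ 2 * (1 - th) * Rr).
  { apply Rmult_le_compat_r; auto. unfold kap. eapply Rle_trans. apply Rmin_r.
    unfold th. replace (1 - (1 - eps * nA ^ 2 / (4 * gamma))) with (eps * nA ^ 2 / (4 * gamma)) by ring.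
    replace (eps ^ 3 * nA ^ 2 / (4 * gamma)) with (eps ^ 2 * (eps * nA ^ 2 / (4 * gamma))) by (field; lra).
    apply Rmult_le_compat_r. lra. apply pow_incr; lra. }
  assert (K6: kap * X <= c * (2 * gamma - c * nA ^ 2 / th) * X).
  { apply Rmult_le_compat_r; auto. unfold kap. eapply Rle_trans. apply Rmin_l.
    apply Rle_trans with (eps * (eps * nA ^ 2 / 2)). right; field.
    apply Rmult_le_compat. lra. apply Rmult_le_pos. nra. lra. lra. lra. }
  assert (E1: c ^ 2 * (- (th / 2 * Rr + nA ^ 2 / (2 * th) * X))
              = - (c ^ 2 * th / 2 * Rr) - c * (c * nA ^ 2 / th) / 2 * X) by (field; lra).
  unfold S1 in K1. rewrite E1 in K2.
  assert (E2: c * (2 * gamma - c * nA ^ 2 / th) * X = 2 * c * gamma * X - c * (c * nA ^ 2 / th) * X) by ring.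
  rewrite E2 in K6.
  nra.
Qed.

Section Fejer.
Context {H G K : Hilbert}.
Variables (f : H -> ER) (g : G -> ER) (h1 : H -> R) (h2 : G -> R) (gh1 : H -> H) (gh2 : G -> G)
  (gamma L1 L2 : R) (A : H -> K) (B : G -> K) (b : K) (nA : R)
  (M1 : nat -> H -> H) (M2 : nat -> G -> G) (c : nat -> R) (eps : R)
  (x : nat -> H) (z : nat -> G) (p : nat -> K).
Hypothesis Hgam : 0 < gamma.
Hypothesis Hfp : proper f.
Hypothesis Hgp : proper g.
Hypothesis Hfsc : sconv gamma f.
Hypothesis Hgc : sconv 0 g.
Hypothesis Hh1c : convex_real h1.
Hypothesis Hh1g : frechet_gradient h1 gh1.
Hypothesis Hh1l : lipschitz L1 gh1.
Hypothesis Hh2c : convex_real h2.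
Hypothesis Hh2g : frechet_gradient h2 gh2.
Hypothesis Hh2l : lipschitz L2 gh2.
Hypothesis HL1 : 0 <= L1.
Hypothesis HL2 : 0 <= L2.
Hypothesis HA : linear_op A.
Hypothesis HB : linear_op B.
Hypothesis HnA : forall u, hnorm (A u) <= nA * hnorm u.
Hypothesis HnApos : 0 < nA.
Hypothesis HM1s : forall k, in_Splus (M1 k).
Hypothesis HM1d : forall k, loewner_ge (M1 k) (M1 (S k)).
Hypothesis HM2s : forall k, in_Splus (M2 k).
Hypothesis HM2d : forall k, loewner_ge (M2 k) (M2 (S k)).
Hypothesis Heps : 0 < eps.
Hypothesis Heps2 : eps * nA ^ 2 < gamma.
Hypothesis Hc : forall k, c (S k) <= c k /\ eps <= c k <= 2 * gamma / nA ^ 2 - eps.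
Hypothesis Hiter : prox_AMA f g gh1 gh2 A B b M1 M2 c x z p.

Definition kappa := Rmin (eps ^ 2 * nA ^ 2 / 2) (eps ^ 3 * nA ^ 2 / (4 * gamma)).

Lemma kappa_pos : 0 < kappa.
Proof.
  assert (0 < nA ^ 2) by (apply pow_lt; lra).
  unfold kappa. apply Rmin_glb_lt.
  apply Rdiv_lt_0_compat; [apply Rmult_lt_0_compat; [apply pow_lt|]|]; lra.
  apply Rdiv_lt_0_compat; [apply Rmult_lt_0_compat; [apply pow_lt|]|]; lra.
Qed.

Variables (xs : H) (zs : G) (ps : K).
Hypothesis Hs : saddle_point f h1 g h2 A B b xs zs ps.

Definition Vf k := inner (vsub (p k) ps) (vsub (p k) ps)
  + c k * Mnorm2 (M1 k) (vsub (x k) xs) + c k * Mnorm2 (M2 k) (vsub (z k) zs).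

Lemma fejer k :
  Vf (S k) + kappa * (inner (vsub (x (S k)) xs) (vsub (x (S k)) xs)
              + inner (vsub (vsub b (A (x (S k)))) (B (z (S k)))) (vsub (vsub b (A (x (S k)))) (B (z (S k)))))
   + c k * Mnorm2 (op_minus_id (M1 k) (L1 / 2)) (vsub (x (S k)) (x k))
   + c k * Mnorm2 (op_minus_id (M2 k) (L2 / 2)) (vsub (z (S k)) (z k)) <= Vf k.
Proof.
  assert (HM1l : forall k, linear_op (M1 k)) by (intro; apply M_lin; auto).
  assert (HM2l : forall k, linear_op (M2 k)) by (intro; apply M_lin; auto).
  destruct (step_x f g gh1 gh2 gamma A B b M1 M2 c x z p ltac:(lra) Hfp Hfsc HA HM1l Hiter k)
    as [fx1 [Ex1 VIx]].
  destruct (step_z f g gh1 gh2 A B b M1 M2 c x z p Hgp Hgc HB HM2l Hiter k) as [gz1 [Ez1 VIz]].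
  destruct (saddle_x f g h1 h2 gh1 gamma A B b ltac:(lra) Hfp Hgp Hfsc Hh1g HA xs zs ps Hs)
    as [fs [Efs Sx]].
  destruct (saddle_z f g h1 h2 gh2 A B b Hfp Hgp Hgc Hh2g HB xs zs ps Hs) as [gs [Egs Sz]].
  pose proof (saddle_feas f g h1 h2 A B b Hfp Hgp xs zs ps Hs) as Feas.
  destruct (Hiter k) as [_ [_ Hp1]].
  set (x0 := x k) in *. set (x1 := x (S k)) in *. set (z0 := z k) in *. set (z1 := z (S k)) in *.
  set (p0 := p k) in *. set (ck := c k) in *.
  set (ux := vsub x1 xs). set (vx := vsub x0 xs). set (ex := vsub x1 x0).
  set (uz := vsub z1 zs). set (vz := vsub z0 zs). set (ez := vsub z1 z0).
  set (r := vsub (vsub b (A x1)) (B z1)) in *.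
  assert (Er: r = vopp (vadd (A ux) (B uz))).
  { assert (Eb: b = vadd (A xs) (B zs)).
    { apply inner_ext. intro w. assert (inner (vsub (vsub b (A xs)) (B zs)) w = 0)
        by (rewrite Feas; apply inner_0_l). autorewrite with inE in *. lra. }
    unfold r, ux, uz. rewrite Eb, (lin_sub _ HA), (lin_sub _ HB). vext. }
  assert (Eex: ex = vsub ux vx) by (unfold ex, ux, vx; vext).
  assert (Eez: ez = vsub uz vz) by (unfold ez, uz, vz; vext).
  specialize (VIx xs fs ltac:(rewrite Efs; simpl; lra)).
  specialize (Sx x1 fx1 ltac:(rewrite Ex1; simpl; lra)).
  specialize (VIz zs gs ltac:(rewrite Egs; simpl; lra)).
  specialize (Sz z1 gz1 ltac:(rewrite Ez1; simpl; lra)).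
  replace (vsub xs x1) with (vopp ux) in VIx by (unfold ux; vext).
  replace (vsub zs z1) with (vopp uz) in VIz by (unfold uz; vext).
  fold ux in Sx. fold uz in Sz. fold ex in VIx. fold ez in VIz.
  rewrite (lin_opp _ HA), (lin_opp _ (HM1l k)) in VIx.
  rewrite (lin_opp _ HB), (lin_opp _ (HM2l k)) in VIz.
  pose proof (three_point h1 gh1 Hh1c Hh1g L1 HL1 Hh1l x0 x1 xs) as T1.
  pose proof (three_point h2 gh2 Hh2c Hh2g L2 HL2 Hh2l z0 z1 zs) as T2.
  fold ux ex in T1. fold uz ez in T2.
  assert (HY: forall th, 0 < th -> inner r (A ux) >=
     - (th / 2 * inner r r + nA ^ 2 / (2 * th) * inner ux ux)).
  { intros th Hth. pose proof (young_inner r (A ux) th Hth). apply Rabs_le_b in H0.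
    assert (inner (A ux) (A ux) <= nA ^ 2 * inner ux ux).
    { rewrite <- !hnorm_sq. specialize (HnA ux). pose proof (hnorm_pos (A ux)).
      replace (nA ^ 2 * (hnorm ux * hnorm ux)) with ((nA * hnorm ux) * (nA * hnorm ux)) by ring.
      apply Rmult_le_compat; auto. }
    assert (/ (2 * th) * inner (A ux) (A ux) <= nA ^ 2 / (2 * th) * inner ux ux).
    { unfold Rdiv. rewrite (Rmult_comm (nA ^ 2)), Rmult_assoc. apply Rmult_le_compat_l; auto.
      left; apply Rinv_0_lt_compat; lra. }
    lra. }
  destruct (Hc k) as [Hck1 [Hck2 Hck3]]. fold ck in Hck1, Hck2, Hck3.
  assert (Hmain: 0 >= inner (vsub (p (S k)) ps) r + ck * inner r (A ux) + inner (vsub (gh1 x0) (gh1 xs)) ux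
     + / 2 * (inner ux (M1 k ux) + inner ex (M1 k ex) - inner vx (M1 k vx))
     + inner (vsub (gh2 z0) (gh2 zs)) uz
     + / 2 * (inner uz (M2 k uz) + inner ez (M2 k ez) - inner vz (M2 k vz)) + gamma * inner ux ux).
  { rewrite Eex in VIx |- *. rewrite Eez in VIz |- *. rewrite (lin_sub _ (HM1l k)) in VIx |- *. rewrite (lin_sub _ (HM2l k)) in VIz |- *.
    rewrite Hp1 in VIz |- *. rewrite Er in VIz |- *.
    autorewrite with inE in VIx, VIz, Sx, Sz |- *.
    try rewrite (inner_sym (B uz) (A ux)) in *. try rewrite (inner_sym ps p0) in *.
    try rewrite (inner_sym (A ux) p0) in *. try rewrite (inner_sym (B uz) p0) in *.
    try rewrite (inner_sym (A ux) ps) in *. try rewrite (inner_sym (B uz) ps) in *.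
    lra. }
  pose proof (core_fejer gamma nA eps ck L1 L2
    (inner (vsub p0 ps) (vsub p0 ps)) (inner (vsub (p (S k)) ps) (vsub (p (S k)) ps))
    (inner (vsub (p (S k)) ps) r) (inner r r) (inner ux ux) (inner r (A ux))
    (inner (vsub (gh1 x0) (gh1 xs)) ux) (inner (vsub (gh2 z0) (gh2 zs)) uz)
    (inner ux (M1 k ux)) (inner vx (M1 k vx)) (inner ex (M1 k ex)) (inner ex ex)
    (inner uz (M2 k uz)) (inner vz (M2 k vz)) (inner ez (M2 k ez)) (inner ez ez)
    Hgam HnApos Heps Heps2 Hck2 Hck3 (inner_pos r) (inner_pos ux)) as CF.
  assert (H2: 2 * ck * inner (vsub (p (S k)) ps) r = inner (vsub (p (S k)) ps) (vsub (p (S k)) ps)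
             - inner (vsub p0 ps) (vsub p0 ps) + ck ^ 2 * inner r r).
  { rewrite Hp1. autorewrite with inE. rewrite (inner_sym r p0), (inner_sym r ps), (inner_sym ps p0). ring. }
  specialize (CF Hmain H2 HY T1 T2).
  assert (Hm1: c (S k) * Mnorm2 (M1 (S k)) ux <= ck * inner ux (M1 k ux)).
  { apply Rmult_le_compat. destruct (Hc (S k)) as [_ [? _]]. lra. apply M_pos; auto. auto.
    specialize (HM1d k ux). apply Rge_le in HM1d. exact HM1d. }
  assert (Hm2: c (S k) * Mnorm2 (M2 (S k)) uz <= ck * inner uz (M2 k uz)).
  { apply Rmult_le_compat. destruct (Hc (S k)) as [_ [? _]]. lra. apply M_pos; auto. auto.
    specialize (HM2d k uz). apply Rge_le in HM2d. exact HM2d. }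
  unfold Vf, kappa, op_minus_id. unfold Mnorm2 at 3 4 5 6.
  fold x0 x1 z0 z1 p0 ck ux uz vx vz ex ez r.
  autorewrite with inE in CF |- *. lra.
Qed.
End Fejer.

Definition sinc (s : nat -> nat) := forall n, (s n < s (S n))%nat.

Lemma sinc_lt s : sinc s -> forall m n, (m < n)%nat -> (s m < s n)%nat.
Proof.
  intros Hs m n Hmn. induction Hmn. apply Hs. specialize (Hs m0). lia.
Qed.
Lemma sinc_le s : sinc s -> forall m n, (m <= n)%nat -> (s m <= s n)%nat.
Proof.
  intros Hs m n Hmn. destruct (Nat.eq_dec m n). subst; lia.
  pose proof (sinc_lt s Hs m n ltac:(lia)). lia.
Qed.
Lemma sinc_ge s : sinc s -> forall n, (n <= s n)%nat.
Proof. intros Hs n. induction n. lia. specialize (Hs n). lia. Qed.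
Lemma sinc_comp s t : sinc s -> sinc t -> sinc (fun n => s (t n)).
Proof. intros Hs Ht n. apply sinc_lt; auto. Qed.
Lemma sinc_id : sinc (fun n => n).
Proof. intro; lia. Qed.

Lemma cv_ext u v l : (forall n, u n = v n) -> Un_cv u l -> Un_cv v l.
Proof.
  intros E Hu e He. destruct (Hu e He) as [N HN]. exists N. intros n Hn. rewrite <- E. auto.
Qed.
Lemma cv_sub u l s : sinc s -> Un_cv u l -> Un_cv (fun n => u (s n)) l.
Proof.
  intros Hs Hu e He. destruct (Hu e He) as [N HN]. exists N. intros n Hn.
  apply HN. pose proof (sinc_ge s Hs n). lia.
Qed.
Lemma cv_shift u l : Un_cv u l -> Un_cv (fun n => u (S n)) l.
Proof. intro. apply (cv_sub u l S). intro; lia. auto. Qed.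
Lemma cv_unshift u l : Un_cv (fun n => u (S n)) l -> Un_cv u l.
Proof.
  intros Hu e He. destruct (Hu e He) as [N HN]. exists (S N). intros n Hn.
  destruct n. lia. apply HN. lia.
Qed.
Lemma cv_const a : Un_cv (fun _ => a) a.
Proof. intros e He. exists 0%nat. intros. unfold Rdist. rewrite Rminus_diag, Rabs_R0. lra. Qed.

Lemma cv_squeeze0 u v N0 : (forall n, (N0 <= n)%nat -> Rabs (u n) <= v n) -> Un_cv v 0 -> Un_cv u 0.
Proof.
  intros Hb Hv e He. destruct (Hv e He) as [N HN]. exists (max N N0). intros n Hn.
  specialize (HN n ltac:(lia)). specialize (Hb n ltac:(lia)). unfold Rdist in *.
  rewrite Rminus_0_r in *. pose proof (Rle_abs (v n)). lra.
Qed.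

Lemma cv_abs0 u : Un_cv (fun n => Rabs (u n)) 0 -> Un_cv u 0.
Proof. intro. apply (cv_squeeze0 u (fun n => Rabs (u n)) 0); auto. intros; lra. Qed.

Lemma cv_to0 u l : Un_cv u l -> Un_cv (fun n => u n - l) 0.
Proof.
  intros Hu e He. destruct (Hu e He) as [N HN]. exists N. intros n Hn. specialize (HN n Hn).
  unfold Rdist in *. rewrite Rminus_0_r. auto.
Qed.
Lemma cv_from0 u l : Un_cv (fun n => u n - l) 0 -> Un_cv u l.
Proof.
  intros Hu e He. destruct (Hu e He) as [N HN]. exists N. intros n Hn. specialize (HN n Hn).
  unfold Rdist in *. rewrite Rminus_0_r in HN. auto.
Qed.

Lemma cv_bounded u l : Un_cv u l -> exists K, forall n, Rabs (u n) <= K.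
Proof.
  intro Hu. destruct (Hu 1 ltac:(lra)) as [N HN].
  assert (forall m, exists K, forall n, (n <= m)%nat -> Rabs (u n) <= K).
  { induction m. exists (Rabs (u 0%nat)). intros n Hn. replace n with 0%nat by lia. lra.
    destruct IHm as [K HK]. exists (Rmax K (Rabs (u (S m)))). intros n Hn.
    destruct (Nat.eq_dec n (S m)). subst. apply Rmax_r.
    eapply Rle_trans. apply HK. lia. apply Rmax_l. }
  destruct (H N) as [K HK]. exists (Rmax K (Rabs l + 1)). intros n.
  destruct (le_lt_dec n N). eapply Rle_trans. apply HK; auto. apply Rmax_l.
  specialize (HN n ltac:(lia)). unfold Rdist in HN.
  eapply Rle_trans; [|apply Rmax_r].
  pose proof (Rabs_triang (u n - l) l). replace (u n - l + l) with (u n) in H0 by ring. lra.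
Qed.

Lemma cv_bdd_mult0 u v K : (forall n, Rabs (u n) <= K) -> Un_cv v 0 -> Un_cv (fun n => u n * v n) 0.
Proof.
  intros Hu Hv. apply (cv_squeeze0 _ (fun n => K * Rabs (v n)) 0).
  intros n _. rewrite Rabs_mult. apply Rmult_le_compat_r. apply Rabs_pos. auto.
  replace 0 with (K * 0) by ring. apply CV_mult. apply cv_const.
  replace 0 with (Rabs 0) by apply Rabs_R0. apply cv_cvabs; auto.
Qed.

Lemma cv_le_ev u l a N0 : Un_cv u l -> (forall n, (N0 <= n)%nat -> u n <= a) -> l <= a.
Proof.
  intros Hu Ha. destruct (Rle_lt_dec l a); auto. exfalso.
  destruct (Hu (l - a) ltac:(lra)) as [N HN]. specialize (HN (max N N0) ltac:(lia)).
  specialize (Ha (max N N0) ltac:(lia)). unfold Rdist in HN.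
  pose proof (Rle_abs (- (u (max N N0) - l))). rewrite Rabs_Ropp in H. lra.
Qed.
Lemma cv_ge_ev u l a N0 : Un_cv u l -> (forall n, (N0 <= n)%nat -> a <= u n) -> a <= l.
Proof.
  intros Hu Ha. destruct (Rle_lt_dec a l); auto. exfalso.
  destruct (Hu (a - l) ltac:(lra)) as [N HN]. specialize (HN (max N N0) ltac:(lia)).
  specialize (Ha (max N N0) ltac:(lia)). unfold Rdist in HN.
  pose proof (Rle_abs (u (max N N0) - l)). lra.
Qed.

Lemma cv_sqrt0 u : (forall n, 0 <= u n) -> Un_cv u 0 -> Un_cv (fun n => sqrt (u n)) 0.
Proof.
  intros Hp Hu e He. destruct (Hu (e * e) ltac:(nra)) as [N HN]. exists N. intros n Hn.
  specialize (HN n Hn). unfold Rdist in *. rewrite Rminus_0_r in *.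
  rewrite (Rabs_pos_eq (u n)) in HN by auto.
  rewrite (Rabs_pos_eq (sqrt (u n))) by apply sqrt_pos.
  rewrite <- (sqrt_Rsqr e) by lra. apply sqrt_lt_1_alt. split; [auto| unfold Rsqr; lra].
Qed.

Lemma cv_sq0 u : Un_cv u 0 -> Un_cv (fun n => u n * u n) 0.
Proof. intro. replace 0 with (0 * 0) by ring. apply CV_mult; auto. Qed.

Lemma freq_sub (P : nat -> nat -> Prop) : (forall k N, exists n, (N <= n)%nat /\ P k n) ->
  exists s, sinc s /\ forall k, P k (s k).
Proof.
  intro HP.
  assert (F: forall kN : nat * nat, { n | (snd kN <= n)%nat /\ P (fst kN) n }).
  { intros [k N]. apply constructive_indefinite_description. apply HP. }
  set (F' := fun k N => proj1_sig (F (k, N))).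
  assert (HF: forall k N, (N <= F' k N)%nat /\ P k (F' k N)).
  { intros k N. unfold F'. destruct (F (k, N)); simpl in *; auto. }
  set (s := fix s n := match n with O => F' O O | S m => F' (S m) (S (s m)) end).
  exists s. split.
  - intro n. simpl. destruct (HF (S n) (S (s n))). lia.
  - intro k. destruct k; simpl; apply HF.
Qed.

Lemma BW_sub u K : (forall n, Rabs (u n) <= K) -> exists s, sinc s /\ exists l, Un_cv (fun n => u (s n)) l.
Proof.
  intro Hb. destruct (Bolzano_Weierstrass u (fun c => - K <= c <= K) (compact_P3 (-K) K)) as [l Hl].
  { intro n. specialize (Hb n). pose proof (Rle_abs (u n)). pose proof (Rle_abs (- u n)). rewrite Rabs_Ropp in H0. lra. }
  assert (Hf: forall k N, exists n, (N <= n)%nat /\ Rabs (u n - l) < / INR (S k)).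
  { intros k N. assert (Hpos: 0 < / INR (S k)) by (apply Rinv_0_lt_compat, lt_0_INR; lia).
    destruct (Hl (fun c => Rabs (c - l) < / INR (S k)) N) as [n [Hn Hv]].
    { exists (mkposreal _ Hpos). intros y Hy. unfold disc in Hy. simpl in Hy. auto. }
    eauto. }
  destruct (freq_sub _ Hf) as [s [Hs Hs2]]. exists s. split; auto. exists l.
  intros e He. destruct (archimed_cor1 e He) as [N [HN HN0]]. exists N. intros n Hn.
  unfold Rdist. eapply Rlt_trans. apply Hs2. eapply Rle_lt_trans; [|apply HN].
  apply Rinv_le_contravar. apply lt_0_INR; lia. apply le_INR; lia.
Qed.

Definition pick_sub (u : nat -> R) : nat -> nat :=
  match excluded_middle_informative (exists s, sinc s /\ exists l, Un_cv (fun n => u (s n)) l) with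
  | left e => proj1_sig (constructive_indefinite_description _ e)
  | right _ => fun n => n
  end.

Lemma pick_sub_sinc u : sinc (pick_sub u).
Proof.
  unfold pick_sub. destruct excluded_middle_informative as [e|e].
  destruct (constructive_indefinite_description _ e) as [s [Hs Hs2]]; simpl; auto.
  apply sinc_id.
Qed.
Lemma pick_sub_cv u K : (forall n, Rabs (u n) <= K) -> exists l, Un_cv (fun n => u (pick_sub u n)) l.
Proof.
  intro Hb. unfold pick_sub. destruct excluded_middle_informative as [e|e].
  destruct (constructive_indefinite_description _ e) as [s [Hs0 Hs]]; simpl; auto.
  exfalso. apply e. eapply BW_sub; eauto.
Qed.

Lemma diagonal (a : nat -> nat -> R) : (forall m, exists K, forall n, Rabs (a m n) <= K) ->
  exists d, sinc d /\ forall m, exists l, Un_cv (fun j => a m (d j)) l.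
Proof.
  intro Hb.
  set (T := fix T m : nat -> nat := match m with
      | O => pick_sub (a O)
      | S m' => fun n => T m' (pick_sub (fun j => a (S m') (T m' j)) n) end).
  assert (HT: forall m, sinc (T m)).
  { induction m; simpl. apply pick_sub_sinc. apply sinc_comp; auto. apply pick_sub_sinc. }
  assert (HTc: forall m, exists l, Un_cv (fun j => a m (T m j)) l).
  { destruct m; simpl. destruct (Hb O) as [K HK]. eapply pick_sub_cv; eauto.
    destruct (Hb (S m)) as [K HK]. apply (pick_sub_cv (fun j => a (S m) (T m j)) K). auto. }
  assert (HTs: forall m j, (m <= j)%nat -> forall n, exists r, (n <= r)%nat /\ T j n = T m r).
  { intros m j Hmj. induction Hmj; intro n. exists n; split; auto.
    simpl. set (rho := pick_sub (fun j0 => a (S m0) (T m0 j0))).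
    destruct (IHHmj (rho n)) as [r [Hr Er]]. exists r. split; auto.
    pose proof (sinc_ge rho (pick_sub_sinc _) n). lia. }
  exists (fun j => T j j). split.
  - intro j. simpl. set (rho := pick_sub (fun j0 => a (S j) (T j j0))).
    apply sinc_lt. auto. pose proof (sinc_ge rho (pick_sub_sinc _) (S j)). lia.
  - intro m. destruct (HTc m) as [l Hl]. exists l. intros e He. destruct (Hl e He) as [N HN].
    exists (max m N). intros j Hj. destruct (HTs m j ltac:(lia) j) as [r [Hr Er]].
    rewrite Er. apply HN. lia.
Qed.

Lemma choice_nat {T : Type} (P : nat -> T -> Prop) : (forall n, exists v, P n v) -> exists f, forall n, P n (f n).
Proof.
  intro HP. exists (fun n => proj1_sig (constructive_indefinite_description _ (HP n))).
  intro n. destruct (constructive_indefinite_description _ (HP n)); auto.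
Qed.

Section W.
Context {H : Hilbert}.

Definition closed_set (C : H -> Prop) := forall l,
  (forall e, 0 < e -> exists v, C v /\ hnorm (vsub v l) < e) -> C l.
Definition convex_set (C : H -> Prop) := forall a b t, C a -> C b -> 0 <= t <= 1 ->
  C (vadd (vscal t a) (vscal (1 - t) b)).

Lemma inner_sub_sq (a b : H) : inner (vsub a b) (vsub a b) = inner a a - 2 * inner a b + inner b b.
Proof. autorewrite with inE. rewrite (inner_sym b a). ring. Qed.

Lemma min_convex (C : H -> Prop) (phi : H -> R) v0 K :
  C v0 -> closed_set C -> convex_set C -> 0 <= K ->
  (forall a b t, C a -> C b -> 0 <= t <= 1 ->
      phi (vadd (vscal t a) (vscal (1 - t) b)) = t * phi a + (1 - t) * phi b) ->
  (forall a b, C a -> C b -> Rabs (phi a - phi b) <= K * hnorm (vsub a b)) ->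
  exists u, C u /\ forall v, C v -> inner u (vsub v u) >= phi v - phi u.
Proof.
  intros Hv0 Hcl Hcv HK Haff Hlip.
  set (J := fun v => / 2 * inner v v - phi v).
  set (m0 := K * K / 2 + Rabs (phi v0) + K * hnorm v0).
  assert (Jlb: forall v, C v -> J v >= - m0).
  { intros v Hv. unfold J, m0. specialize (Hlip v v0 Hv Hv0). apply Rabs_le_b in Hlip.
    pose proof (hnorm_sub_triangle v vzero v0).
    replace (vsub v vzero) with v in H0 by vext. replace (vsub vzero v0) with (vopp v0) in H0 by vext.
    rewrite hnorm_opp in H0. rewrite <- hnorm_sq.
    pose proof (hnorm_pos v). pose proof (hnorm_pos v0). pose proof (Rle_abs (phi v0)).
    assert (K * hnorm (vsub v v0) <= K * (hnorm v + hnorm v0)) by (apply Rmult_le_compat_l; lra).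
    assert (0 <= (hnorm v - K) ^ 2) by apply pow2_ge_0. nra. }
  set (E := fun r => exists v, C v /\ r = - J v).
  assert (HEb: bound E).
  { exists m0. intros r [v [Hv Er]]. specialize (Jlb v Hv). lra. }
  assert (HEn: exists r, E r) by (exists (- J v0); exists v0; auto).
  destruct (completeness E HEb HEn) as [s [Hub Hlub]].
  set (m := - s).
  assert (Jge: forall v, C v -> J v >= m).
  { intros v Hv. assert (E (- J v)) by (exists v; auto). specialize (Hub _ H0). unfold m; lra. }
  assert (Jnear: forall e, 0 < e -> exists v, C v /\ J v < m + e).
  { intros e He. apply NNPP. intro Hn. 
    assert (is_upper_bound E (s - e)).
    { intros r [v [Hv Er]]. destruct (Rle_lt_dec r (s - e)); auto. exfalso. apply Hn.
      exists v. split; auto. unfold m. lra. }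
    specialize (Hlub _ H0). lra. }
  destruct (choice_nat (fun n v => C v /\ J v < m + / INR (S n))) as [a Ha].
  { intro n. apply Jnear. apply Rinv_0_lt_compat, lt_0_INR; lia. }
  (* parallelogram *)
  assert (Par: forall x y, C x -> C y -> inner (vsub x y) (vsub x y) <= 4 * (J x + J y - 2 * m)).
  { intros x y Hx Hy.
    pose proof (Jge _ (Hcv x y (/2) Hx Hy ltac:(lra))).
    unfold J in *. rewrite (Haff x y (/2) Hx Hy ltac:(lra)) in H0.
    replace (1 - / 2) with (/ 2) in * by field.
    rewrite inner_sub_sq. autorewrite with inE in H0. rewrite (inner_sym y x) in H0. lra. }
  assert (Cau: forall e, 0 < e -> exists N, forall p q, (N <= p)%nat -> (N <= q)%nat ->
      sqrt (inner (vadd (a p) (vopp (a q))) (vadd (a p) (vopp (a q)))) < e).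
  { intros e He. destruct (archimed_cor1 (e * e / 8)) as [N [HN HN0]].
    { apply Rdiv_lt_0_compat; nra. }
    exists N. intros p q Hp Hq. fold (vsub (a p) (a q)).
    destruct (Ha p) as [Cp Jp]. destruct (Ha q) as [Cq Jq].
    pose proof (Par _ _ Cp Cq).
    assert (Hip: / INR (S p) <= / INR N).
    { apply Rinv_le_contravar. apply lt_0_INR; lia. apply le_INR; lia. }
    assert (Hiq: / INR (S q) <= / INR N).
    { apply Rinv_le_contravar. apply lt_0_INR; lia. apply le_INR; lia. }
    rewrite <- (sqrt_Rsqr e) by lra. apply sqrt_lt_1_alt. split. apply inner_pos.
    unfold Rsqr. lra. }
  destruct (hcomplete H a Cau) as [l Hl].
  assert (Hl': forall e, 0 < e -> exists N, forall n, (N <= n)%nat -> hnorm (vsub (a n) l) < e) by exact Hl.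
  assert (Cl: C l).
  { apply Hcl. intros e He. destruct (Hl' e He) as [N HN]. exists (a N). split. apply Ha. apply HN; lia. }
  assert (Jl: J l <= m).
  { apply le_eps. intros e He.
    set (R := 2 * hnorm l + 1 + K).
    assert (HR: 0 < R) by (unfold R; pose proof (hnorm_pos l); lra).
    set (d := Rmin 1 (e / (2 * R))).
    assert (Hd: 0 < d) by (apply Rmin_glb_lt; [lra| apply Rdiv_lt_0_compat; lra]).
    destruct (Hl' d Hd) as [N1 HN1].
    destruct (archimed_cor1 (e / 2) ltac:(lra)) as [N2 [HN2 HN20]].
    set (n := max N1 N2). specialize (HN1 n ltac:(unfold n; lia)).
    destruct (Ha n) as [Cn Jn].
    assert (/ INR (S n) <= / INR N2).
    { apply Rinv_le_contravar. apply lt_0_INR; lia. apply le_INR; unfold n; lia. }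
    assert (HJ: J l - J (a n) <= e / 2).
    { unfold J. set (w := vsub (a n) l).
      replace (a n) with (vadd l w) by (unfold w; vext).
      replace (a n) with (vadd l w) in HN1 by (unfold w; vext).
      replace (vsub (vadd l w) l) with w in HN1 by vext.
      specialize (Hlip l (vadd l w) Cl ltac:(replace (vadd l w) with (a n) by (unfold w; vext); auto)).
      replace (vsub l (vadd l w)) with (vopp w) in Hlip by vext. rewrite hnorm_opp in Hlip.
      apply Rabs_le_b in Hlip.
      autorewrite with inE. rewrite (inner_sym w l).
      pose proof (cs l w). apply Rabs_le_b in H1. rewrite <- (hnorm_sq w).
      pose proof (hnorm_pos w). pose proof (hnorm_pos l).
      assert (d <= 1) by apply Rmin_l. assert (d <= e / (2 * R)) by apply Rmin_r.
      assert (hnorm w * R <= e / 2).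
      { apply Rle_trans with (e / (2 * R) * R). apply Rmult_le_compat_r; lra.
        right; field; lra. }
      unfold R in H6. nra. }
    lra. }
  exists l. split; auto. intros v Hv.
  set (n2 := inner (vsub v l) (vsub v l)).
  assert (Hn2: 0 <= n2) by apply inner_pos.
  apply Rle_ge. apply (le_eps_mult _ _ (n2 / 2)). lra. intros e He.
  set (t := Rmin 1 e).
  assert (Ht: 0 < t) by (apply Rmin_glb_lt; lra).
  assert (Ht1: t <= 1) by apply Rmin_l. assert (Hte: t <= e) by apply Rmin_r.
  pose proof (Jge _ (Hcv v l t Hv Cl ltac:(lra))) as Jw. unfold J in Jw.
  rewrite (Haff v l t Hv Cl ltac:(lra)) in Jw.
  assert (Ew: / 2 * inner (vadd (vscal t v) (vscal (1 - t) l)) (vadd (vscal t v) (vscal (1 - t) l))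
     = / 2 * inner l l + t * inner l (vsub v l) + t * t / 2 * n2).
  { unfold n2. autorewrite with inE. rewrite (inner_sym v l). field. }
  unfold J in Jw, Jl. rewrite Ew in Jw.
  assert (t * (inner l (vsub v l) - (phi v - phi l) + t / 2 * n2) >= 0) by nra.
  assert (inner l (vsub v l) - (phi v - phi l) + t / 2 * n2 >= 0).
  { destruct (Rle_lt_dec 0 (inner l (vsub v l) - (phi v - phi l) + t / 2 * n2)); [lra|].
    assert (t * (inner l (vsub v l) - (phi v - phi l) + t / 2 * n2) < 0) by (apply Rmult_pos_neg; lra).
    lra. }
  assert (t / 2 * n2 <= e * (n2 / 2)).
  { replace (t / 2 * n2) with (t * (n2 / 2)) by field. apply Rmult_le_compat_r; lra. }
  lra.
Qed.

End W.

Section W2.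
Context {H : Hilbert}.

Definition scv (u : nat -> H) (l : H) := Un_cv (fun n => hnorm (vsub (u n) l)) 0.

Lemma weak_sub (u : nat -> H) l s : sinc s -> weak_cv u l -> weak_cv (fun n => u (s n)) l.
Proof. intros Hs Hu w. apply (cv_sub (fun n => inner (u n) w)); auto. Qed.

Lemma scv_weak (u : nat -> H) l : scv u l -> weak_cv u l.
Proof.
  intros Hu w. apply cv_from0.
  apply (cv_squeeze0 _ (fun n => hnorm (vsub (u n) l) * hnorm w) 0).
  intros n _. replace (inner (u n) w - inner l w) with (inner (vsub (u n) l) w) by (autorewrite with inE; ring).
  apply cs. replace 0 with (0 * hnorm w) by ring. apply CV_mult; auto. apply cv_const.
Qed.

Lemma weak_perturb (u v : nat -> H) l : weak_cv u l ->
  Un_cv (fun n => hnorm (vsub (v n) (u n))) 0 -> weak_cv v l.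
Proof.
  intros Hu Hd w. apply cv_from0.
  replace 0 with (0 + 0) by ring.
  apply (cv_ext (fun n => (inner (u n) w - inner l w) + inner (vsub (v n) (u n)) w)).
  intro n. autorewrite with inE. ring.
  apply CV_plus. apply cv_to0, Hu.
  apply (cv_squeeze0 _ (fun n => hnorm (vsub (v n) (u n)) * hnorm w) 0).
  intros n _. apply cs. replace 0 with (0 * hnorm w) by ring. apply CV_mult; auto. apply cv_const.
Qed.

Lemma weak_bdd_strong (u : nat -> H) l (w : nat -> H) m K :
  weak_cv u l -> (forall n, hnorm (u n) <= K) -> scv w m ->
  Un_cv (fun n => inner (u n) (w n)) (inner l m).
Proof.
  intros Hu HK Hw. apply cv_from0. replace 0 with (0 + 0) by ring.
  apply (cv_ext (fun n => (inner (u n) m - inner l m) + inner (u n) (vsub (w n) m))).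
  intro n. autorewrite with inE. ring.
  apply CV_plus. apply cv_to0, Hu.
  apply (cv_squeeze0 _ (fun n => K * hnorm (vsub (w n) m)) 0).
  intros n _. eapply Rle_trans. apply cs. apply Rmult_le_compat_r. apply hnorm_pos. auto.
  replace 0 with (K * 0) by ring. apply CV_mult; auto. apply cv_const.
Qed.

Lemma weak_unique (u : nat -> H) l1 l2 : weak_cv u l1 -> weak_cv u l2 -> l1 = l2.
Proof.
  intros H1 H2. apply inner_ext. intro w. eapply UL_sequence; eauto.
Qed.

Lemma weak_closed (C : H -> Prop) (u : nat -> H) l N0 : closed_set C -> convex_set C ->
  (forall n, (N0 <= n)%nat -> C (u n)) -> weak_cv u l -> C l.
Proof.
  intros Hcl Hcv HC Hu.
  destruct (min_convex C (fun v => inner l v) (u N0) (hnorm l) (HC N0 (le_n _)) Hcl Hcv (hnorm_pos l))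
    as [pi [Cpi Hpi]].
  { intros a b t _ _ _. autorewrite with inE. ring. }
  { intros a b _ _. replace (inner l a - inner l b) with (inner l (vsub a b)) by (autorewrite with inE; ring).
    apply cs. }
  assert (Hge: forall n, (N0 <= n)%nat -> 0 <= inner (u n) (vsub pi l) - inner pi (vsub pi l)).
  { intros n Hn. specialize (Hpi (u n) (HC n Hn)). autorewrite with inE in *.
    rewrite (inner_sym (u n) pi), (inner_sym (u n) l) in *. try rewrite (inner_sym l pi) in *. lra. }
  assert (Hlim: Un_cv (fun n => inner (u n) (vsub pi l) - inner pi (vsub pi l))
                     (inner l (vsub pi l) - inner pi (vsub pi l))).
  { apply CV_minus. apply Hu. apply cv_const. }
  pose proof (cv_ge_ev _ _ _ N0 Hlim Hge).
  assert (E: vsub pi l = vzero).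
  { apply inner_def. replace (inner (vsub pi l) (vsub pi l)) with
       (- (inner l (vsub pi l) - inner pi (vsub pi l))) by (autorewrite with inE; ring).
    pose proof (inner_pos (vsub pi l)). replace (inner (vsub pi l) (vsub pi l)) with
       (- (inner l (vsub pi l) - inner pi (vsub pi l))) in H1 by (autorewrite with inE; ring). lra. }
  replace l with pi; auto. apply inner_ext. intro w.
  assert (inner (vsub pi l) w = 0) by (rewrite E; apply inner_0_l). autorewrite with inE in H1. lra.
Qed.

End W2.

Lemma cv_cauchy U : (exists l, Un_cv U l) -> Cauchy_crit U.
Proof.
  intros [l Hl] e He. destruct (Hl (e/2) ltac:(lra)) as [N HN]. exists N. intros n m Hn Hm.
  pose proof (HN m Hm) as Hm'. specialize (HN n Hn). unfold Rdist in *. rename Hm' into H.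
  pose proof (Rabs_triang (U n - l) (l - U m)). replace (U n - l + (l - U m)) with (U n - U m) in H0 by ring.
  rewrite <- Rabs_Ropp in H. replace (- (U m - l)) with (l - U m) in H by ring. lra.
Qed.

Definition lim_or0 (U : nat -> R) : R :=
  match excluded_middle_informative (exists l, Un_cv U l) with
  | left e => proj1_sig (constructive_indefinite_description _ e)
  | right _ => 0 end.

Lemma lim_or0_cv U : (exists l, Un_cv U l) -> Un_cv U (lim_or0 U).
Proof.
  intro Hex. unfold lim_or0. destruct excluded_middle_informative as [e|e]; [|contradiction].
  destruct (constructive_indefinite_description _ e); simpl; auto.
Qed.

Section WC.
Context {H : Hilbert}.
Variable u : nat -> H.
Variable K : R.
Hypothesis Hb : forall n, hnorm (u n) <= K.

Inductive spn : H -> Prop :=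
| sp0 : spn vzero
| spu m : spn (u m)
| spa a b : spn a -> spn b -> spn (vadd a b)
| sps t a : spn a -> spn (vscal t a).

Definition Vs (w : H) := forall e, 0 < e -> exists s, spn s /\ hnorm (vsub s w) < e.

Lemma Vs_spn s : spn s -> Vs s.
Proof. intros Hs e He. exists s. split; auto. rewrite vsub_diag, hnorm_0. auto. Qed.

Lemma Vs_add a b : Vs a -> Vs b -> Vs (vadd a b).
Proof.
  intros Ha Hb' e He. destruct (Ha (e/2) ltac:(lra)) as [s1 [S1 N1]].
  destruct (Hb' (e/2) ltac:(lra)) as [s2 [S2 N2]]. exists (vadd s1 s2). split. constructor; auto.
  replace (vsub (vadd s1 s2) (vadd a b)) with (vadd (vsub s1 a) (vsub s2 b)) by vext.
  eapply Rle_lt_trans. apply hnorm_triangle. lra.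
Qed.

Lemma Vs_scal t a : Vs a -> Vs (vscal t a).
Proof.
  intros Ha e He. destruct (Ha (e / (Rabs t + 1))) as [s [Ss Ns]].
  apply Rdiv_lt_0_compat; [lra| pose proof (Rabs_pos t); lra].
  exists (vscal t s). split. constructor; auto.
  replace (vsub (vscal t s) (vscal t a)) with (vscal t (vsub s a)) by vext.
  rewrite hnorm_scal. pose proof (Rabs_pos t). pose proof (hnorm_pos (vsub s a)).
  apply Rle_lt_trans with ((Rabs t + 1) * hnorm (vsub s a)). nra.
  apply Rmult_lt_compat_l with (r := Rabs t + 1) in Ns; [|lra].
  replace ((Rabs t + 1) * (e / (Rabs t + 1))) with e in Ns by (field; lra). lra.
Qed.

Lemma Vs_closed : closed_set Vs.
Proof.
  intros l Hl e He. destruct (Hl (e/2) ltac:(lra)) as [v [Vv Nv]].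
  destruct (Vv (e/2) ltac:(lra)) as [s [Ss Ns]]. exists s. split; auto.
  eapply Rle_lt_trans. apply (hnorm_sub_triangle s v l). lra.
Qed.

Lemma Vs_convex : convex_set Vs.
Proof. intros a b t Ha Hb' _. apply Vs_add; apply Vs_scal; auto. Qed.

Lemma K_pos : 0 <= K.
Proof. pose proof (Hb 0%nat). pose proof (hnorm_pos (u 0%nat)). lra. Qed.

Lemma weak_compact : exists s, sinc s /\ exists l, weak_cv (fun n => u (s n)) l.
Proof.
  pose proof K_pos as HK.
  destruct (diagonal (fun m n => inner (u n) (u m))) as [d [Hd Hdc]].
  { intro m. exists (K * K). intro n. eapply Rle_trans. apply cs.
    apply Rmult_le_compat; try apply hnorm_pos; auto. }
  set (v := fun j => u (d j)).
  assert (C1: forall s, spn s -> exists l, Un_cv (fun j => inner (v j) s) l).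
  { induction 1.
    - exists 0. apply (cv_ext (fun _ => 0)). intro; rewrite inner_0_r; auto. apply cv_const.
    - apply Hdc.
    - destruct IHspn1 as [l1 H1]. destruct IHspn2 as [l2 H2]. exists (l1 + l2).
      apply (cv_ext (fun j => inner (v j) a + inner (v j) b)). intro; rewrite inner_add_r; auto.
      apply CV_plus; auto.
    - destruct IHspn as [l1 H1]. exists (t * l1).
      apply (cv_ext (fun j => t * inner (v j) a)). intro; rewrite inner_scal_r; auto.
      apply CV_mult; auto. apply cv_const. }
  assert (Hvb: forall j, hnorm (v j) <= K) by (intro; apply Hb).
  assert (C2: forall w, Vs w -> exists l, Un_cv (fun j => inner (v j) w) l).
  { intros w Hw. destruct (R_complete (fun j => inner (v j) w)) as [l Hl]; [|eauto].
    intros e He. destruct (Hw (e / (3 * (K + 1)))) as [s [Ss Ns]].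
    apply Rdiv_lt_0_compat; lra.
    destruct (cv_cauchy _ (C1 s Ss) (e / 3) ltac:(lra)) as [N HN]. exists N. intros n m Hn Hm.
    specialize (HN n m Hn Hm). unfold Rdist in *.
    assert (B1: forall j, Rabs (inner (v j) w - inner (v j) s) <= K * (e / (3 * (K + 1)))).
    { intro j. replace (inner (v j) w - inner (v j) s) with (inner (v j) (vsub w s)) by (autorewrite with inE; ring).
      eapply Rle_trans. apply cs. apply Rmult_le_compat; try apply hnorm_pos; auto.
      rewrite hnorm_sub_sym; lra. }
    assert (K * (e / (3 * (K + 1))) <= e / 3).
    { apply Rle_trans with ((K + 1) * (e / (3 * (K + 1)))).
      apply Rmult_le_compat_r. left; apply Rdiv_lt_0_compat; lra. lra. right; field; lra. }
    pose proof (B1 n). pose proof (B1 m). apply Rabs_le_b in H1. apply Rabs_le_b in H2.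
    apply Rabs_def1; apply Rabs_def2 in HN; lra. }
  set (phi := fun w => lim_or0 (fun j => inner (v j) w)).
  assert (Hphi: forall w, Vs w -> Un_cv (fun j => inner (v j) w) (phi w)).
  { intros w Hw. apply lim_or0_cv, C2, Hw. }
  assert (Hadd: forall a b, Vs a -> Vs b -> phi (vadd a b) = phi a + phi b).
  { intros a b Ha Hb'. apply (UL_sequence (fun j => inner (v j) (vadd a b))).
    apply Hphi, Vs_add; auto.
    apply (cv_ext (fun j => inner (v j) a + inner (v j) b)). intro; rewrite inner_add_r; auto.
    apply CV_plus; apply Hphi; auto. }
  assert (Hsc: forall t a, Vs a -> phi (vscal t a) = t * phi a).
  { intros t a Ha. apply (UL_sequence (fun j => inner (v j) (vscal t a))).
    apply Hphi, Vs_scal; auto.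
    apply (cv_ext (fun j => t * inner (v j) a)). intro; rewrite inner_scal_r; auto.
    apply CV_mult. apply cv_const. apply Hphi; auto. }
  assert (V0: Vs vzero) by (apply Vs_spn; constructor).
  assert (Vv: forall j, Vs (v j)) by (intro; apply Vs_spn; constructor).
  destruct (min_convex Vs phi vzero K V0 Vs_closed Vs_convex HK) as [ub [Vub Hub]].
  { intros a b t Ha Hb' _. rewrite Hadd, !Hsc; auto; apply Vs_scal; auto. }
  { intros a b Ha Hb'.
    assert (E: phi a - phi b = phi (vsub a b)).
    { replace (vsub a b) with (vadd a (vscal (-1) b)) by vext. rewrite Hadd, Hsc; auto. ring.
      apply Vs_scal; auto. }
    rewrite E. assert (Vab: Vs (vsub a b)).
    { replace (vsub a b) with (vadd a (vscal (-1) b)) by vext. apply Vs_add; auto. apply Vs_scal; auto. }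
    pose proof (cv_cvabs _ _ (Hphi _ Vab)).
    apply (cv_le_ev _ _ _ 0 H0). intros n _. eapply Rle_trans. apply cs.
    apply Rmult_le_compat_r. apply hnorm_pos. auto. }
  assert (Hrep: forall s, Vs s -> inner ub s = phi s).
  { intros s Hs.
    assert (Vp: Vs (vadd ub s)) by (apply Vs_add; auto).
    assert (Vm: Vs (vadd ub (vscal (-1) s))) by (apply Vs_add; auto; apply Vs_scal; auto).
    pose proof (Hub _ Vp). pose proof (Hub _ Vm).
    rewrite Hadd in H0, H1 by (auto; apply Vs_scal; auto). rewrite Hsc in H1 by auto.
    replace (vsub (vadd ub s) ub) with s in H0 by vext.
    replace (vsub (vadd ub (vscal (-1) s)) ub) with (vscal (-1) s) in H1 by vext.
    rewrite inner_scal_r in H1. lra. }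
  exists d. split; auto. exists ub. intro w.
  destruct (min_convex Vs (fun y => inner w y) vzero (hnorm w) V0 Vs_closed Vs_convex (hnorm_pos w))
    as [pi [Vpi Hpi]].
  { intros a b t _ _ _. autorewrite with inE. ring. }
  { intros a b _ _. replace (inner w a - inner w b) with (inner w (vsub a b)) by (autorewrite with inE; ring).
    apply cs. }
  assert (Orth: forall s, Vs s -> inner (vsub pi w) s = 0).
  { intros s Hs.
    assert (Vp: Vs (vadd pi s)) by (apply Vs_add; auto).
    assert (Vm: Vs (vadd pi (vscal (-1) s))) by (apply Vs_add; auto; apply Vs_scal; auto).
    pose proof (Hpi _ Vp). pose proof (Hpi _ Vm).
    replace (vsub (vadd pi s) pi) with s in H0 by vext.
    replace (vsub (vadd pi (vscal (-1) s)) pi) with (vscal (-1) s) in H1 by vext.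
    autorewrite with inE in *. rewrite (inner_sym w s) in *. lra. }
  apply (cv_ext (fun j => inner (v j) pi)).
  { intro j. pose proof (Orth (v j) (Vv j)). autorewrite with inE in H0.
    rewrite (inner_sym pi (v j)), (inner_sym w (v j)) in H0. unfold v in *. lra. }
  replace (inner ub w) with (phi pi). apply Hphi; auto.
  rewrite <- Hrep by auto. pose proof (Orth ub Vub). autorewrite with inE in H0.
  rewrite (inner_sym pi ub), (inner_sym w ub) in H0. lra.
Qed.

End WC.

Section SL.
Context {T : Hilbert}.
Variables (F : T -> ER) (h : T -> R) (gh : T -> T).
Hypothesis HF : lsc F.
Hypothesis HFc : sconv 0 F.
Hypothesis Hhc : convex_real h.
Hypothesis Hhg : frechet_gradient h gh.

Lemma sublevel_closed lam : closed_set (fun w => exists r, F w = Fin r /\ r + h w <= lam).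
Proof.
  intros l Hl. destruct (F l) as [rl|] eqn:El.
  - exists rl. split; auto. destruct (Rle_lt_dec (rl + h l) lam) as [Hle|Hlt]; auto. exfalso.
    set (z := (rl + h l - lam) / 2).
    assert (Hz: 0 < z) by (unfold z; lra).
    destruct (HF l (lam - h l + z)) as [d1 [Hd1 Hn]].
    { rewrite El. simpl. unfold z. lra. }
    destruct (h_cont h gh Hhg l z Hz) as [d2 [Hd2 Hc]].
    destruct (Hl (Rmin d1 d2) ltac:(apply Rmin_glb_lt; auto)) as [v [[rv [Ev Hv]] Nv]].
    apply (Hn v). pose proof (Rmin_l d1 d2). lra.
    rewrite Ev. simpl. assert (Hvd: hnorm (vsub v l) < d2) by (pose proof (Rmin_r d1 d2); lra).
    specialize (Hc v Hvd). apply Rabs_def2 in Hc. lra.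
  - exfalso. destruct (HF l (lam - h l + 1)) as [d1 [Hd1 Hn]]. { rewrite El. simpl. auto. }
    destruct (h_cont h gh Hhg l 1 ltac:(lra)) as [d2 [Hd2 Hc]].
    destruct (Hl (Rmin d1 d2) ltac:(apply Rmin_glb_lt; auto)) as [v [[rv [Ev Hv]] Nv]].
    apply (Hn v). pose proof (Rmin_l d1 d2). lra.
    rewrite Ev. simpl. assert (Hvd: hnorm (vsub v l) < d2) by (pose proof (Rmin_r d1 d2); lra).
    specialize (Hc v Hvd). apply Rabs_def2 in Hc. lra.
Qed.

Lemma sublevel_convex lam : convex_set (fun w => exists r, F w = Fin r /\ r + h w <= lam).
Proof.
  intros a b t [ra [Ea Ha]] [rb [Eb Hb]] Ht.
  pose proof (HFc a b t ra rb Ht ltac:(rewrite Ea; simpl; lra) ltac:(rewrite Eb; simpl; lra)) as Hc.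
  pose proof (Hhc a b t (h a) (h b) Ht (Rle_refl _) (Rle_refl _)) as Hh. simpl in Hh.
  destruct (F (vadd (vscal t a) (vscal (1 - t) b))) as [r|]; simpl in Hc; [|contradiction].
  exists r. split; auto. replace (0 / 2) with 0 in Hc by field. nra.
Qed.

Lemma sublevel_weak (u : nat -> T) l (rr Rr : nat -> R) lam :
  weak_cv u l -> (forall j, F (u j) = Fin (rr j)) -> (forall j, rr j + h (u j) <= Rr j) -> Un_cv Rr lam ->
  exists r, F l = Fin r /\ r + h l <= lam.
Proof.
  intros Hu HFu Hr HR.
  assert (Hall: forall e, 0 < e -> exists r, F l = Fin r /\ r + h l <= lam + e).
  { intros e He. destruct (HR e He) as [N HN].
    apply (weak_closed _ u l N (sublevel_closed (lam + e)) (sublevel_convex (lam + e))); auto.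
    intros n Hn. exists (rr n). split; auto. specialize (HN n Hn). unfold Rdist in HN.
    apply Rabs_def2 in HN. specialize (Hr n). lra. }
  destruct (Hall 1 ltac:(lra)) as [r [Er _]]. exists r. split; auto.
  apply le_eps. intros e He. destruct (Hall e He) as [r' [Er' Hr']]. rewrite Er in Er'. inversion Er'. lra.
Qed.

End SL.

Lemma lyap (V D : nat -> R) : (forall k, 0 <= V k) -> (forall k, 0 <= D k) ->
  (forall k, V (S k) + D k <= V k) -> (exists l, Un_cv V l) /\ Un_cv D 0.
Proof.
  intros HV HD Hs.
  assert (Hdec: Un_decreasing V) by (intro k; specialize (Hs k); specialize (HD k); lra).
  destruct (decreasing_cv V Hdec) as [l Hl].
  { exists 0. intros r [n Hn]. unfold opp_seq in Hn. specialize (HV n). lra. }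
  split. eauto.
  apply (cv_squeeze0 D (fun k => V k - V (S k)) 0).
  intros n _. rewrite Rabs_pos_eq by auto. specialize (Hs n). lra.
  replace 0 with (l - l) by ring. apply CV_minus; auto. apply cv_shift; auto.
Qed.

Definition fin_val (e : ER) := match e with Fin r => r | PInf => 0 end.
Lemma fin_val_eq e r : e = Fin r -> e = Fin (fin_val e).
Proof. intros ->. reflexivity. Qed.

Lemma Vdec_le (V : nat -> R) : (forall k, V (S k) <= V k) -> forall k, V k <= V 0%nat.
Proof. intros Hs k. induction k. lra. specialize (Hs k). lra. Qed.

Section Conseq.
Context {H G K : Hilbert}.
Variables (f : H -> ER) (g : G -> ER) (h1 : H -> R) (h2 : G -> R) (gh1 : H -> H) (gh2 : G -> G)
  (gamma L1 L2 : R) (A : H -> K) (B : G -> K) (b : K) (nA : R)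
  (M1 : nat -> H -> H) (M2 : nat -> G -> G) (c : nat -> R) (eps : R)
  (x : nat -> H) (z : nat -> G) (p : nat -> K).
Hypothesis Hgam : 0 < gamma.
Hypothesis Hfp : proper f.
Hypothesis Hgp : proper g.
Hypothesis Hfsc : sconv gamma f.
Hypothesis Hgc : sconv 0 g.
Hypothesis Hh1c : convex_real h1.
Hypothesis Hh1g : frechet_gradient h1 gh1.
Hypothesis Hh1l : lipschitz L1 gh1.
Hypothesis Hh2c : convex_real h2.
Hypothesis Hh2g : frechet_gradient h2 gh2.
Hypothesis Hh2l : lipschitz L2 gh2.
Hypothesis HL1 : 0 <= L1.
Hypothesis HL2 : 0 <= L2.
Hypothesis HA : linear_op A.
Hypothesis HB : linear_op B.
Hypothesis HnA : forall u, hnorm (A u) <= nA * hnorm u.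
Hypothesis HnApos : 0 < nA.
Hypothesis HM1s : forall k, in_Splus (M1 k).
Hypothesis HM1d : forall k, loewner_ge (M1 k) (M1 (S k)).
Hypothesis HM2s : forall k, in_Splus (M2 k).
Hypothesis HM2d : forall k, loewner_ge (M2 k) (M2 (S k)).
Hypothesis Heps : 0 < eps.
Hypothesis Heps2 : eps * nA ^ 2 < gamma.
Hypothesis Hc : forall k, c (S k) <= c k /\ eps <= c k <= 2 * gamma / nA ^ 2 - eps.
Hypothesis Hiter : prox_AMA f g gh1 gh2 A B b M1 M2 c x z p.
Hypothesis HM1L : forall k, in_Splus (op_minus_id (M1 k) (L1 / 2)).
Hypothesis HM2L : forall k, in_Splus (op_minus_id (M2 k) (L2 / 2)).

Definition FJ := fejer f g h1 h2 gh1 gh2 gamma L1 L2 A B b nA M1 M2 c eps x z p Hgam Hfp Hgp Hfsc Hgc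
  Hh1c Hh1g Hh1l Hh2c Hh2g Hh2l HL1 HL2 HA HB HnA HnApos HM1s HM1d HM2s HM2d Heps Heps2 Hc Hiter.

Definition res k := vsub (vsub b (A (x k))) (B (z k)).

Lemma c_pos k : 0 < c k.
Proof. destruct (Hc k) as [_ [? _]]. lra. Qed.
Lemma c_ub k : c k <= 2 * gamma / nA ^ 2.
Proof. destruct (Hc k) as [_ [_ ?]]. lra. Qed.
Lemma c_lb k : eps <= c k.
Proof. destruct (Hc k) as [_ [? _]]. lra. Qed.

Lemma Mn_pos {T : Hilbert} (M : T -> T) y : in_Splus M -> 0 <= Mnorm2 M y.
Proof. intros [_ [_ h]]; apply h. Qed.

Section S1.
Variables (xs : H) (zs : G) (ps : K).
Hypothesis Hs : saddle_point f h1 g h2 A B b xs zs ps.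

Let V := Vf M1 M2 c x z p xs zs ps.
Let D := fun k => kappa gamma nA eps * (inner (vsub (x (S k)) xs) (vsub (x (S k)) xs) + inner (res (S k)) (res (S k)))
   + c k * Mnorm2 (op_minus_id (M1 k) (L1 / 2)) (vsub (x (S k)) (x k))
   + c k * Mnorm2 (op_minus_id (M2 k) (L2 / 2)) (vsub (z (S k)) (z k)).

Lemma V_pos k : 0 <= V k.
Proof.
  unfold V, Vf. pose proof (inner_pos (vsub (p k) ps)). pose proof (c_pos k).
  pose proof (Mn_pos _ (vsub (x k) xs) (HM1s k)). pose proof (Mn_pos _ (vsub (z k) zs) (HM2s k)).
  nra.
Qed.
Lemma D_pos k : 0 <= D k.
Proof.
  unfold D. pose proof (kappa_pos gamma nA eps Hgam HnApos Heps).
  pose proof (inner_pos (vsub (x (S k)) xs)). pose proof (inner_pos (res (S k))). pose proof (c_pos k).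
  pose proof (Mn_pos _ (vsub (x (S k)) (x k)) (HM1L k)). pose proof (Mn_pos _ (vsub (z (S k)) (z k)) (HM2L k)).
  nra.
Qed.
Lemma VD k : V (S k) + D k <= V k.
Proof. pose proof (FJ xs zs ps Hs k). unfold V, D, res. lra. Qed.

Lemma V_conv : (exists l, Un_cv V l) /\ Un_cv D 0.
Proof. apply lyap. apply V_pos. apply D_pos. apply VD. Qed.

Lemma x_scv : scv x xs.
Proof.
  destruct V_conv as [_ HD]. unfold scv. apply cv_unshift.
  pose proof (kappa_pos gamma nA eps Hgam HnApos Heps) as Hk.
  assert (Un_cv (fun k => inner (vsub (x (S k)) xs) (vsub (x (S k)) xs)) 0).
  { apply (cv_squeeze0 _ (fun k => / kappa gamma nA eps * D k) 0).
    intros n _. rewrite Rabs_pos_eq by apply inner_pos. pose proof (D_pos n).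
    unfold D in *. pose proof (inner_pos (res (S n))). pose proof (c_pos n).
    pose proof (Mn_pos _ (vsub (x (S n)) (x n)) (HM1L n)). pose proof (Mn_pos _ (vsub (z (S n)) (z n)) (HM2L n)).
    apply Rmult_le_reg_l with (kappa gamma nA eps); auto. rewrite <- Rmult_assoc, Rinv_r by lra. nra.
    replace 0 with (/ kappa gamma nA eps * 0) by ring. apply CV_mult; auto. apply cv_const. }
  apply (cv_ext (fun k => sqrt (inner (vsub (x (S k)) xs) (vsub (x (S k)) xs)))). reflexivity.
  apply cv_sqrt0; auto. intro; apply inner_pos.
Qed.

Lemma res_cv : Un_cv (fun k => hnorm (res k)) 0.
Proof.
  destruct V_conv as [_ HD]. apply cv_unshift.
  pose proof (kappa_pos gamma nA eps Hgam HnApos Heps) as Hk.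
  assert (Un_cv (fun k => inner (res (S k)) (res (S k))) 0).
  { apply (cv_squeeze0 _ (fun k => / kappa gamma nA eps * D k) 0).
    intros n _. rewrite Rabs_pos_eq by apply inner_pos. pose proof (D_pos n).
    unfold D in *. pose proof (inner_pos (vsub (x (S n)) xs)). pose proof (c_pos n).
    pose proof (Mn_pos _ (vsub (x (S n)) (x n)) (HM1L n)). pose proof (Mn_pos _ (vsub (z (S n)) (z n)) (HM2L n)).
    apply Rmult_le_reg_l with (kappa gamma nA eps); auto. rewrite <- Rmult_assoc, Rinv_r by lra. nra.
    replace 0 with (/ kappa gamma nA eps * 0) by ring. apply CV_mult; auto. apply cv_const. }
  apply (cv_ext (fun k => sqrt (inner (res (S k)) (res (S k))))). reflexivity.
  apply cv_sqrt0; auto. intro; apply inner_pos.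
Qed.

Lemma ez_cv : Un_cv (fun k => Mnorm2 (op_minus_id (M2 k) (L2 / 2)) (vsub (z (S k)) (z k))) 0.
Proof.
  destruct V_conv as [_ HD].
  apply (cv_squeeze0 _ (fun k => / eps * D k) 0).
  intros n _. rewrite Rabs_pos_eq by (apply Mn_pos; auto). pose proof (D_pos n).
  unfold D in *. pose proof (kappa_pos gamma nA eps Hgam HnApos Heps).
  pose proof (inner_pos (vsub (x (S n)) xs)). pose proof (inner_pos (res (S n))). pose proof (c_lb n).
  pose proof (Mn_pos _ (vsub (x (S n)) (x n)) (HM1L n)). pose proof (Mn_pos _ (vsub (z (S n)) (z n)) (HM2L n)).
  apply Rmult_le_reg_l with eps; auto. rewrite <- Rmult_assoc, Rinv_r by lra. nra.
  replace 0 with (/ eps * 0) by ring. apply CV_mult; auto. apply cv_const.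
Qed.

Lemma V_bound k : V k <= V 0%nat.
Proof. apply Vdec_le. intro k'. pose proof (VD k'). pose proof (D_pos k'). lra. Qed.

Lemma p_bound : exists Kp, forall k, hnorm (p k) <= Kp.
Proof.
  exists (sqrt (V 0%nat) + hnorm ps). intro k.
  assert (hnorm (vsub (p k) ps) <= sqrt (V 0%nat)).
  { unfold hnorm. apply sqrt_le_1_alt. pose proof (V_bound k). unfold V, Vf in *.
    pose proof (c_pos k). pose proof (Mn_pos _ (vsub (x k) xs) (HM1s k)).
    pose proof (Mn_pos _ (vsub (z k) zs) (HM2s k)). nra. }
  pose proof (hnorm_triangle (vsub (p k) ps) ps). replace (vadd (vsub (p k) ps) ps) with (p k) in H1 by vext.
  lra.
Qed.

End S1.

Lemma vsub_eq0 {T : Hilbert} (a1 a2 : T) : vsub a1 a2 = vzero -> a1 = a2.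
Proof.
  intro E. apply inner_ext. intro w. assert (inner (vsub a1 a2) w = 0) by (rewrite E; apply inner_0_l).
  autorewrite with inE in H0. lra.
Qed.

Lemma scv_unique {T : Hilbert} (u : nat -> T) l1 l2 : scv u l1 -> scv u l2 -> l1 = l2.
Proof.
  intros H1 H2. apply vsub_eq0, hnorm_eq0.
  assert (Un_cv (fun n => hnorm (vsub (u n) l1) + hnorm (vsub (u n) l2)) 0).
  { replace 0 with (0 + 0) by ring. apply CV_plus; auto. }
  pose proof (hnorm_pos (vsub l1 l2)).
  assert (hnorm (vsub l1 l2) <= 0).
  { apply (cv_ge_ev _ _ _ 0 H0). intros n _. rewrite (hnorm_sub_sym (u n) l1).
    apply hnorm_sub_triangle. }
  lra.
Qed.

Lemma scv_bounded {T : Hilbert} (u : nat -> T) l : scv u l -> exists Ku, forall n, hnorm (u n) <= Ku.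
Proof.
  intro Hu. destruct (cv_bounded _ _ Hu) as [Kb HK]. exists (Kb + hnorm l). intro n.
  specialize (HK n). rewrite Rabs_pos_eq in HK by apply hnorm_pos.
  pose proof (hnorm_triangle (vsub (u n) l) l). replace (vadd (vsub (u n) l) l) with (u n) in H0 by vext.
  lra.
Qed.

Lemma scv_diff0 {T : Hilbert} (u : nat -> T) l : scv u l -> Un_cv (fun k => hnorm (vsub (u (S k)) (u k))) 0.
Proof.
  intro Hu. apply (cv_squeeze0 _ (fun k => hnorm (vsub (u (S k)) l) + hnorm (vsub (u k) l)) 0).
  intros n _. rewrite Rabs_pos_eq by apply hnorm_pos. rewrite (hnorm_sub_sym (u n) l).
  apply hnorm_sub_triangle.
  replace 0 with (0 + 0) by ring. apply CV_plus; auto. apply (cv_shift (fun n => hnorm (vsub (u n) l))); auto.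
Qed.

Section Base.
Variables (xs0 : H) (zs0 : G) (ps0 : K).
Hypothesis Hs0 : saddle_point f h1 g h2 A B b xs0 zs0 ps0.

Lemma xs_unique xs zs ps : saddle_point f h1 g h2 A B b xs zs ps -> xs = xs0.
Proof. intro Hs. apply (scv_unique x). exact (x_scv xs zs ps Hs). exact (x_scv xs0 zs0 ps0 Hs0). Qed.

Lemma Bz_scv : scv (fun k => B (z k)) (vsub b (A xs0)).
Proof.
  unfold scv. apply (cv_squeeze0 _ (fun k => hnorm (res k) + nA * hnorm (vsub (x k) xs0)) 0).
  intros n _. rewrite Rabs_pos_eq by apply hnorm_pos.
  replace (vsub (B (z n)) (vsub b (A xs0))) with (vadd (vopp (res n)) (vopp (A (vsub (x n) xs0)))).
  eapply Rle_trans. apply hnorm_triangle. rewrite !hnorm_opp. specialize (HnA (vsub (x n) xs0)). lra.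
  unfold res. rewrite (lin_sub _ HA). vext.
  replace 0 with (0 + nA * 0) by ring. apply CV_plus. apply res_cv with xs0 zs0 ps0; auto.
  apply CV_mult. apply cv_const. apply x_scv with zs0 ps0; auto.
Qed.

Lemma dp_cv : Un_cv (fun k => hnorm (vsub (p (S k)) (p k))) 0.
Proof.
  apply (cv_squeeze0 _ (fun k => 2 * gamma / nA ^ 2 * hnorm (res (S k))) 0).
  intros n _. rewrite Rabs_pos_eq by apply hnorm_pos. destruct (Hiter n) as [_ [_ Hp]].
  rewrite Hp. replace (vsub (vadd (p n) (vscal (c n) (vsub (vsub b (A (x (S n)))) (B (z (S n)))))) (p n))
    with (vscal (c n) (res (S n))) by (unfold res; vext).
  rewrite hnorm_scal, Rabs_pos_eq by (left; apply c_pos).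
  apply Rmult_le_compat_r. apply hnorm_pos. apply c_ub.
  replace 0 with (2 * gamma / nA ^ 2 * 0) by ring. apply CV_mult. apply cv_const.
  apply (cv_shift (fun k => hnorm (res k))). apply res_cv with xs0 zs0 ps0; auto.
Qed.

Lemma feas0 : B zs0 = vsub b (A xs0).
Proof.
  pose proof (saddle_feas f g h1 h2 A B b Hfp Hgp xs0 zs0 ps0 Hs0).
  apply inner_ext. intro w. assert (inner (vsub (vsub b (A xs0)) (B zs0)) w = 0) by (rewrite H0; apply inner_0_l).
  autorewrite with inE in *. lra.
Qed.

Hypothesis Hcase : (exists alpha, 0 < alpha /\
              forall k, in_Palpha alpha (op_minus_id (M2 k) (L2 / 2)))
        \/ (exists Bs : K -> G, is_adjoint B Bs /\
              exists beta, 0 < beta /\ in_Palpha beta (fun v => Bs (B v))).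

Lemma dz_cv : Un_cv (fun k => hnorm (vsub (z (S k)) (z k))) 0.
Proof.
  destruct Hcase as [[al [Hal HP]] | [Bs [Had [be [Hbe HP]]]]].
  - apply cv_sqrt0. intro; apply inner_pos.
    apply (cv_squeeze0 _ (fun k => / al * Mnorm2 (op_minus_id (M2 k) (L2 / 2)) (vsub (z (S k)) (z k))) 0).
    intros n _. rewrite Rabs_pos_eq by apply inner_pos. destruct (HP n) as [_ Hl].
    specialize (Hl (vsub (z (S n)) (z n))). unfold Mnorm2 at 2 in Hl. rewrite inner_scal_r in Hl.
    apply Rmult_le_reg_l with al; auto. rewrite <- Rmult_assoc, Rinv_r by lra. lra.
    replace 0 with (/ al * 0) by ring. apply CV_mult. apply cv_const. apply ez_cv with xs0 zs0 ps0; auto.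
  - assert (HBb: forall y, be * inner y y <= inner (B y) (B y)).
    { intro y. destruct HP as [_ Hl]. specialize (Hl y). unfold Mnorm2 in Hl. rewrite inner_scal_r in Hl.
      rewrite (Had y (B y)). lra. }
    apply cv_sqrt0. intro; apply inner_pos.
    pose proof (Bz_scv) as HBz. pose proof (scv_diff0 _ _ HBz) as HdB.
    apply (cv_squeeze0 _ (fun k => / be * (hnorm (vsub (B (z (S k))) (B (z k))) * hnorm (vsub (B (z (S k))) (B (z k))))) 0).
    intros n _. rewrite Rabs_pos_eq by apply inner_pos. specialize (HBb (vsub (z (S n)) (z n))).
    rewrite (lin_sub _ HB) in HBb. rewrite hnorm_sq.
    apply Rmult_le_reg_l with be; auto. rewrite <- Rmult_assoc, Rinv_r by lra. lra.
    replace 0 with (/ be * 0) by ring. apply CV_mult. apply cv_const. apply cv_sq0; auto.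
Qed.

Lemma z_bound : exists Kz, forall k, hnorm (z k) <= Kz.
Proof.
  destruct Hcase as [[al [Hal HP]] | [Bs [Had [be [Hbe HP]]]]].
  - exists (sqrt (Vf M1 M2 c x z p xs0 zs0 ps0 0%nat / (al * eps)) + hnorm zs0). intro k.
    assert (hnorm (vsub (z k) zs0) <= sqrt (Vf M1 M2 c x z p xs0 zs0 ps0 0%nat / (al * eps))).
    { unfold hnorm. apply sqrt_le_1_alt. pose proof (V_bound xs0 zs0 ps0 Hs0 k). unfold Vf in *.
      pose proof (c_lb k). pose proof (Mn_pos _ (vsub (x k) xs0) (HM1s k)).
      pose proof (inner_pos (vsub (p k) ps0)).
      set (y := vsub (z k) zs0) in *. pose proof (inner_pos y).
      destruct (HP k) as [_ Hl]. specialize (Hl y). unfold Mnorm2 at 2 in Hl.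
      rewrite inner_scal_r in Hl. unfold Mnorm2, op_minus_id in Hl. rewrite inner_sub_r, inner_scal_r in Hl.
      assert (al * inner y y <= Mnorm2 (M2 k) y).
      { unfold Mnorm2. assert (0 <= L2 / 2 * inner y y) by (apply Rmult_le_pos; lra). lra. }
      assert (eps * (al * inner y y) <= c k * Mnorm2 (M2 k) y).
      { apply Rmult_le_compat; try lra. apply Rmult_le_pos; lra. }
      apply Rmult_le_reg_r with (al * eps). apply Rmult_lt_0_compat; lra.
      unfold Rdiv. rewrite Rmult_assoc, Rinv_l by (apply Rgt_not_eq, Rmult_lt_0_compat; lra). nra. }
    pose proof (hnorm_triangle (vsub (z k) zs0) zs0). replace (vadd (vsub (z k) zs0) zs0) with (z k) in H1 by vext.
    lra.
  - assert (HBb: forall y, be * inner y y <= inner (B y) (B y)).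
    { intro y. destruct HP as [_ Hl]. specialize (Hl y). unfold Mnorm2 in Hl. rewrite inner_scal_r in Hl.
      rewrite (Had y (B y)). lra. }
    destruct (scv_bounded _ _ Bz_scv) as [KB HKB].
    exists (sqrt (/ be) * (KB + hnorm (B zs0)) + hnorm zs0). intro k.
    assert (hnorm (vsub (z k) zs0) <= sqrt (/ be) * (KB + hnorm (B zs0))).
    { specialize (HBb (vsub (z k) zs0)). rewrite (lin_sub _ HB) in HBb.
      pose proof (hnorm_triangle (B (z k)) (vopp (B zs0))). rewrite hnorm_opp in H0. fold (vsub (B (z k)) (B zs0)) in H0.
      specialize (HKB k). simpl in HKB.
      assert (hnorm (vsub (B (z k)) (B zs0)) <= KB + hnorm (B zs0)) by lra.
      unfold hnorm at 1. rewrite <- (sqrt_Rsqr (KB + hnorm (B zs0))) by (pose proof (hnorm_pos (vsub (B (z k)) (B zs0))); lra).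
      rewrite <- sqrt_mult_alt by (left; apply Rinv_0_lt_compat; lra).
      apply sqrt_le_1_alt. unfold Rsqr.
      rewrite <- (hnorm_sq (vsub (B (z k)) (B zs0))) in HBb. pose proof (hnorm_pos (vsub (B (z k)) (B zs0))).
      assert (hnorm (vsub (B (z k)) (B zs0)) * hnorm (vsub (B (z k)) (B zs0)) <= (KB + hnorm (B zs0)) * (KB + hnorm (B zs0)))
        by (apply Rmult_le_compat; lra).
      apply Rmult_le_reg_l with be; auto. rewrite <- Rmult_assoc, Rinv_r by lra. lra. }
    pose proof (hnorm_triangle (vsub (z k) zs0) zs0). replace (vadd (vsub (z k) zs0) zs0) with (z k) in H1 by vext.
    lra.
Qed.

Hypothesis Hflsc : lsc f.
Hypothesis Hglsc : lsc g.
Hypothesis Hfcv : sconv 0 f.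
Variable CB : R.
Hypothesis HBbd : forall v, hnorm (B v) <= CB * hnorm v.

Section Clu.
Variables (sg : nat -> nat) (zb : G) (pb : K).
Hypothesis Hsg : sinc sg.
Hypothesis Hzw : weak_cv (fun j => z (sg j)) zb.
Hypothesis Hpw : weak_cv (fun j => p (sg j)) pb.

Let y := vsub b (A xs0).

Lemma sinc_S : sinc (fun j => S (sg j)).
Proof. intro n. specialize (Hsg n). lia. Qed.

Lemma Hz1w : weak_cv (fun j => z (S (sg j))) zb.
Proof.
  apply (weak_perturb (fun j => z (sg j))); auto.
  apply (cv_sub (fun k => hnorm (vsub (z (S k)) (z k))) 0 sg Hsg). apply dz_cv.
Qed.
Lemma Hp1w : weak_cv (fun j => p (S (sg j))) pb.
Proof.
  apply (weak_perturb (fun j => p (sg j))); auto.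
  apply (cv_sub (fun k => hnorm (vsub (p (S k)) (p k))) 0 sg Hsg). apply dp_cv.
Qed.
Lemma Hx1s : scv (fun j => x (S (sg j))) xs0.
Proof. apply (cv_sub (fun n => hnorm (vsub (x n) xs0)) 0 _ sinc_S). apply (x_scv xs0 zs0 ps0 Hs0). Qed.
Lemma HBz1s : scv (fun j => B (z (S (sg j)))) y.
Proof. apply (cv_sub (fun n => hnorm (vsub (B (z n)) y)) 0 _ sinc_S). apply Bz_scv. Qed.
Lemma Hdz1 : Un_cv (fun j => hnorm (vsub (z (S (sg j))) (z (sg j)))) 0.
Proof. apply (cv_sub (fun k => hnorm (vsub (z (S k)) (z k))) 0 sg Hsg). apply dz_cv. Qed.
Lemma Hdx1 : Un_cv (fun j => hnorm (vsub (x (S (sg j))) (x (sg j)))) 0.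
Proof. apply (cv_sub (fun k => hnorm (vsub (x (S k)) (x k))) 0 sg Hsg). apply scv_diff0 with xs0. apply (x_scv xs0 zs0 ps0 Hs0). Qed.


Lemma feas_b : B zb = y.
Proof.
  assert (HCB: forall v w, hnorm (vsub (B v) (B w)) <= Rabs CB * hnorm (vsub v w)).
  { intros v w. rewrite <- (lin_sub _ HB). eapply Rle_trans. apply HBbd. apply Rmult_le_compat_r.
    apply hnorm_pos. apply Rle_abs. }
  assert (Hall: forall eta, 0 < eta -> hnorm (vsub (B zb) y) <= eta).
  { intros eta Heta. destruct (HBz1s eta Heta) as [N HN].
    apply (weak_closed (fun v => hnorm (vsub (B v) y) <= eta) (fun j => z (S (sg j))) zb N); [| |idtac| apply Hz1w].
    - intros l Hl. apply le_eps_mult with (c := Rabs CB + 1). pose proof (Rabs_pos CB); lra.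
      intros e He. destruct (Hl e He) as [v [Hv Nv]].
      pose proof (hnorm_sub_triangle (B l) (B v) y). rewrite hnorm_sub_sym in Nv.
      pose proof (HCB l v). pose proof (Rabs_pos CB). pose proof (hnorm_pos (vsub l v)). nra.
    - intros a1 a2 t Ha1 Ha2 Ht.
      replace (vsub (B (vadd (vscal t a1) (vscal (1 - t) a2))) y) with
        (vadd (vscal t (vsub (B a1) y)) (vscal (1 - t) (vsub (B a2) y)))
        by (rewrite (lin_add _ HB), !(lin_scal _ HB); vext).
      eapply Rle_trans. apply hnorm_triangle. rewrite !hnorm_scal, !Rabs_pos_eq by lra. nra.
    - intros n Hn. specialize (HN n Hn). unfold Rdist in HN. rewrite Rminus_0_r, Rabs_pos_eq in HN by apply hnorm_pos. lra. }
  apply vsub_eq0, hnorm_eq0. pose proof (hnorm_pos (vsub (B zb) y)).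
  assert (hnorm (vsub (B zb) y) <= 0) by (apply le_eps; intros; rewrite Rplus_0_l; apply Hall; auto). lra.
Qed.

Lemma norm_sub_le {T : Hilbert} (v w : T) : hnorm (vsub v w) <= hnorm v + hnorm w.
Proof. unfold vsub. eapply Rle_trans. apply hnorm_triangle. rewrite hnorm_opp. lra. Qed.

Lemma small_term {T : Hilbert} (Mk : nat -> T -> T) (e u : nat -> T) CM Ku :
  0 <= CM -> (forall j d, hnorm (Mk j d) <= CM * hnorm d) -> (forall j, hnorm (u j) <= Ku) ->
  Un_cv (fun j => hnorm (e j)) 0 ->
  Un_cv (fun j => inner (e j) (Mk j (u j)) + inner (u j) (Mk j (e j))) 0.
Proof.
  intros HC HM Hu He.
  apply (cv_squeeze0 _ (fun j => (2 * CM * Ku) * hnorm (e j)) 0).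
  intros n _. eapply Rle_trans. apply Rabs_triang.
  pose proof (cs (e n) (Mk n (u n))). pose proof (cs (u n) (Mk n (e n))).
  pose proof (HM n (u n)). pose proof (HM n (e n)). pose proof (Hu n).
  pose proof (hnorm_pos (e n)). pose proof (hnorm_pos (u n)). pose proof (hnorm_pos (Mk n (u n))).
  pose proof (hnorm_pos (Mk n (e n))).
  assert (hnorm (e n) * hnorm (Mk n (u n)) <= CM * Ku * hnorm (e n)).
  { apply Rle_trans with (hnorm (e n) * (CM * hnorm (u n))). apply Rmult_le_compat_l; auto.
    replace (CM * Ku * hnorm (e n)) with (hnorm (e n) * (CM * Ku)) by ring.
    apply Rmult_le_compat_l; auto. apply Rmult_le_compat_l; auto. }
  assert (hnorm (u n) * hnorm (Mk n (e n)) <= CM * Ku * hnorm (e n)).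
  { apply Rle_trans with (hnorm (u n) * (CM * hnorm (e n))). apply Rmult_le_compat_l; auto.
    replace (CM * Ku * hnorm (e n)) with (Ku * (CM * hnorm (e n))) by ring.
    apply Rmult_le_compat_r; auto. apply Rmult_le_pos; auto. }
  lra.
  replace 0 with (2 * CM * Ku * 0) by ring. apply CV_mult; auto. apply cv_const.
Qed.

Lemma grad_term {T : Hilbert} (gh : T -> T) Lg (a1 a2 u : nat -> T) Ku :
  lipschitz Lg gh -> 0 <= Lg -> (forall j, hnorm (u j) <= Ku) ->
  Un_cv (fun j => hnorm (vsub (a1 j) (a2 j))) 0 ->
  Un_cv (fun j => inner (vsub (gh (a1 j)) (gh (a2 j))) (u j)) 0.
Proof.
  intros Hl HL Hu Hd.
  apply (cv_squeeze0 _ (fun j => (Lg * Ku) * hnorm (vsub (a1 j) (a2 j))) 0).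
  intros n _. eapply Rle_trans. apply cs.
  pose proof (Hl (a1 n) (a2 n)). pose proof (Hu n). pose proof (hnorm_pos (u n)).
  pose proof (hnorm_pos (vsub (gh (a1 n)) (gh (a2 n)))). pose proof (hnorm_pos (vsub (a1 n) (a2 n))).
  apply Rle_trans with (Lg * hnorm (vsub (a1 n) (a2 n)) * hnorm (u n)).
  apply Rmult_le_compat_r; auto.
  replace (Lg * Ku * hnorm (vsub (a1 n) (a2 n))) with (Lg * hnorm (vsub (a1 n) (a2 n)) * Ku) by ring.
  apply Rmult_le_compat_l; auto. apply Rmult_le_pos; auto.
  replace 0 with (Lg * Ku * 0) by ring. apply CV_mult; auto. apply cv_const.
Qed.

Lemma Z_lim v a : ERle (g v) (Fin a) ->
  exists gb, g zb = Fin gb /\ gb + h2 zb <= a + h2 v - inner pb (B v) + inner pb y.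
Proof.
  intro Hv.
  assert (HM2l : forall k, linear_op (M2 k)) by (intro; apply M_lin; auto).
  destruct (M_bound M2 HM2s HM2d) as [CM [HCM HCMb]].
  destruct z_bound as [Kz HKz]. destruct (p_bound xs0 zs0 ps0 Hs0) as [Kp HKp].
  set (rr := fun j => fin_val (g (z (S (sg j))))).
  set (Rr := fun j => (a + h2 v) - inner (p (S (sg j))) (B v) + inner (p (S (sg j))) (B (z (S (sg j))))
     - inner (vsub (gh2 (z (S (sg j)))) (gh2 (z (sg j)))) (vsub v (z (S (sg j))))
     + / 2 * (inner (vsub (z (S (sg j))) (z (sg j))) (M2 (sg j) (vsub v (z (S (sg j)))))
              + inner (vsub v (z (S (sg j)))) (M2 (sg j) (vsub (z (S (sg j))) (z (sg j)))))).
  apply (sublevel_weak g h2 gh2 Hglsc Hgc Hh2c Hh2g (fun j => z (S (sg j))) zb rr Rr); auto.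
  - apply Hz1w.
  - intro j. destruct (step_z f g gh1 gh2 A B b M1 M2 c x z p Hgp Hgc HB HM2l Hiter (sg j))
      as [gz1 [E _]]. unfold rr. apply fin_val_eq with gz1. auto.
  - intro j. destruct (step_z f g gh1 gh2 A B b M1 M2 c x z p Hgp Hgc HB HM2l Hiter (sg j))
      as [gz1 [E VI]]. unfold rr. rewrite E. simpl. specialize (VI v a Hv).
    pose proof (grad_ineq h2 gh2 Hh2c Hh2g (z (S (sg j))) v).
    unfold Rr. rewrite (lin_sub _ HB), inner_sub_r in VI.
    rewrite (inner_sub_l (gh2 _) (gh2 _)). lra.
  - assert (Hb1: forall j, hnorm (vsub v (z (S (sg j)))) <= hnorm v + Kz).
    { intro j. eapply Rle_trans. apply norm_sub_le. specialize (HKz (S (sg j))). lra. }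
    replace (a + h2 v - inner pb (B v) + inner pb y) with
      ((a + h2 v) - inner pb (B v) + inner pb y - 0 + / 2 * 0) by ring.
    unfold Rr. apply CV_plus. apply CV_minus. apply CV_plus. apply CV_minus.
    + apply cv_const.
    + apply Hp1w.
    + apply (weak_bdd_strong (fun j => p (S (sg j))) pb (fun j => B (z (S (sg j)))) y Kp Hp1w).
      intro; apply HKp. apply HBz1s.
    + apply (grad_term gh2 L2 (fun j => z (S (sg j))) (fun j => z (sg j)) (fun j => vsub v (z (S (sg j)))) (hnorm v + Kz));
        auto. apply Hdz1.
    + apply CV_mult. apply cv_const.
      apply (small_term (fun j => M2 (sg j)) (fun j => vsub (z (S (sg j))) (z (sg j))) (fun j => vsub v (z (S (sg j))))
        CM (hnorm v + Kz)); auto. apply Hdz1.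
Qed.

Lemma X_lim w a : ERle (f w) (Fin a) ->
  exists fb, f xs0 = Fin fb /\ fb + h1 xs0 <= a + h1 w - inner pb (A w) + inner pb (A xs0).
Proof.
  intro Hw.
  assert (HM1l : forall k, linear_op (M1 k)) by (intro; apply M_lin; auto).
  destruct (M_bound M1 HM1s HM1d) as [CM [HCM HCMb]].
  destruct (scv_bounded _ _ (x_scv xs0 zs0 ps0 Hs0)) as [Kx HKx].
  destruct (p_bound xs0 zs0 ps0 Hs0) as [Kp HKp].
  set (rr := fun j => fin_val (f (x (S (sg j))))).
  set (Rr := fun j => (a + h1 w) - inner (p (sg j)) (A w) + inner (p (sg j)) (A (x (S (sg j))))
     - inner (vsub (gh1 (x (S (sg j)))) (gh1 (x (sg j)))) (vsub w (x (S (sg j))))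
     + / 2 * (inner (vsub (x (S (sg j))) (x (sg j))) (M1 (sg j) (vsub w (x (S (sg j)))))
              + inner (vsub w (x (S (sg j)))) (M1 (sg j) (vsub (x (S (sg j))) (x (sg j)))))).
  apply (sublevel_weak f h1 gh1 Hflsc Hfcv Hh1c Hh1g (fun j => x (S (sg j))) xs0 rr Rr); auto.
  - apply scv_weak, Hx1s.
  - intro j. destruct (step_x f g gh1 gh2 gamma A B b M1 M2 c x z p ltac:(lra) Hfp Hfsc HA HM1l Hiter (sg j))
      as [fx1 [E _]]. unfold rr. apply fin_val_eq with fx1. auto.
  - intro j. destruct (step_x f g gh1 gh2 gamma A B b M1 M2 c x z p ltac:(lra) Hfp Hfsc HA HM1l Hiter (sg j))
      as [fx1 [E VI]]. unfold rr. rewrite E. simpl. specialize (VI w a Hw).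
    pose proof (grad_ineq h1 gh1 Hh1c Hh1g (x (S (sg j))) w).
    pose proof (inner_pos (vsub w (x (S (sg j))))).
    assert (0 <= gamma / 2 * inner (vsub w (x (S (sg j)))) (vsub w (x (S (sg j))))) by (apply Rmult_le_pos; lra).
    unfold Rr. rewrite (lin_sub _ HA), inner_sub_r in VI.
    rewrite (inner_sub_l (gh1 _) (gh1 _)). lra.
  - assert (Hb1: forall j, hnorm (vsub w (x (S (sg j)))) <= hnorm w + Kx).
    { intro j. eapply Rle_trans. apply norm_sub_le. specialize (HKx (S (sg j))). lra. }
    replace (a + h1 w - inner pb (A w) + inner pb (A xs0)) with
      ((a + h1 w) - inner pb (A w) + inner pb (A xs0) - 0 + / 2 * 0) by ring.
    unfold Rr. apply CV_plus. apply CV_minus. apply CV_plus. apply CV_minus.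
    + apply cv_const.
    + apply Hpw.
    + apply (weak_bdd_strong (fun j => p (sg j)) pb (fun j => A (x (S (sg j)))) (A xs0) Kp Hpw).
      intro; apply HKp.
      apply (cv_squeeze0 _ (fun j => nA * hnorm (vsub (x (S (sg j))) xs0)) 0).
      intros n _. rewrite Rabs_pos_eq by apply hnorm_pos. rewrite <- (lin_sub _ HA). apply HnA.
      replace 0 with (nA * 0) by ring. apply CV_mult. apply cv_const. apply Hx1s.
    + apply (grad_term gh1 L1 (fun j => x (S (sg j))) (fun j => x (sg j)) (fun j => vsub w (x (S (sg j)))) (hnorm w + Kx));
        auto. apply Hdx1.
    + apply CV_mult. apply cv_const.
      apply (small_term (fun j => M1 (sg j)) (fun j => vsub (x (S (sg j))) (x (sg j))) (fun j => vsub w (x (S (sg j))))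
        CM (hnorm w + Kx)); auto. apply Hdx1.
Qed.

Lemma cluster_saddle : saddle_point f h1 g h2 A B b xs0 zb pb.
Proof.
  destruct Hfp as [w0 Hw0]. destruct (f w0) as [a0|] eqn:Ew0; [|congruence].
  destruct Hgp as [v0 Hv0]. destruct (g v0) as [b0|] eqn:Ev0; [|congruence].
  destruct (X_lim w0 a0 ltac:(rewrite Ew0; simpl; lra)) as [fb [Efb _]].
  destruct (Z_lim v0 b0 ltac:(rewrite Ev0; simpl; lra)) as [gb [Egb _]].
  assert (Hr: vsub (vsub b (A xs0)) (B zb) = vzero) by (rewrite feas_b; apply vsub_diag).
  intros x' z' p'. split.
  - unfold Lagr. rewrite Efb, Egb, Hr, !inner_0_r. simpl. lra.
  - unfold Lagr. rewrite Efb, Egb, Hr, inner_0_r.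
    destruct (f x') as [a|] eqn:Ex; destruct (g z') as [a'|] eqn:Ez; simpl; auto.
    destruct (X_lim x' a ltac:(rewrite Ex; simpl; lra)) as [fb' [Efb' HX]].
    destruct (Z_lim z' a' ltac:(rewrite Ez; simpl; lra)) as [gb' [Egb' HZ]].
    rewrite Efb in Efb'. inversion Efb'. rewrite Egb in Egb'. inversion Egb'. subst fb' gb'.
    unfold y in HZ. autorewrite with inE in *. lra.
Qed.

End Clu.

Lemma dec_cv (u : nat -> R) : (forall k, u (S k) <= u k) -> (forall k, 0 <= u k) -> exists l, Un_cv u l.
Proof.
  intros Hd Hp. destruct (decreasing_cv u Hd) as [l Hl]. 
  exists 0. intros r [n Hn]. unfold opp_seq in Hn. specialize (Hp n). lra. eauto.
Qed.

Lemma weak_M_lemma (bs : nat -> G) (sg : nat -> nat) (e : G) Kb :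
  sinc sg -> weak_cv bs vzero -> (forall j, hnorm (bs j) <= Kb) ->
  Un_cv (fun j => inner (bs j) (M2 (sg j) e)) 0.
Proof.
  intros Hsg Hw Hb.
  destruct (M_diff M2 HM2s HM2d) as [C [HC HCd]].
  destruct (dec_cv (fun k => Mnorm2 (M2 k) e)) as [Qe HQe].
  { intro k. pose proof (HM2d k e). lra. }
  { intro k. apply Mn_pos; auto. }
  assert (HQge: forall k, Qe <= Mnorm2 (M2 k) e).
  { intro k. apply (cv_le_ev _ _ _ k HQe). intros n Hn. apply (M_mono M2 HM2d k n Hn). }
  intros eps0 He0.
  set (Kb' := Rabs Kb + 1).
  assert (HKb: 0 < Kb') by (unfold Kb'; pose proof (Rabs_pos Kb); lra).
  set (del := Rsqr (eps0 / (2 * Kb')) / (C + 1)).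
  assert (Hdel: 0 < del).
  { unfold del. apply Rdiv_lt_0_compat; [|lra]. unfold Rsqr.
    assert (0 < eps0 / (2 * Kb')) by (apply Rdiv_lt_0_compat; lra). nra. }
  destruct (HQe del Hdel) as [m Hm].
  destruct (Hw (M2 m e) (eps0 / 2) ltac:(lra)) as [N HN].
  exists (max N m). intros j Hj. unfold Rdist. rewrite Rminus_0_r.
  specialize (HN j ltac:(lia)). rewrite inner_0_l in HN. unfold Rdist in HN. rewrite Rminus_0_r in HN.
  assert (Hsj: (m <= sg j)%nat) by (pose proof (sinc_ge sg Hsg j); lia).
  specialize (HCd m (sg j) Hsj e).
  set (T := vsub (M2 m e) (M2 (sg j) e)) in *.
  assert (HT: inner T T <= C * del).
  { eapply Rle_trans. apply HCd. apply Rmult_le_compat_l; auto.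
    specialize (Hm m (le_n _)). unfold Rdist in Hm. apply Rabs_def2 in Hm. specialize (HQge (sg j)). lra. }
  assert (HTn: hnorm T < eps0 / (2 * Kb')).
  { apply Rle_lt_trans with (sqrt (C * del)). unfold hnorm. apply sqrt_le_1_alt. auto.
      rewrite <- (sqrt_Rsqr (eps0 / (2 * Kb'))) by (left; apply Rdiv_lt_0_compat; lra).
      apply sqrt_lt_1_alt. split. apply Rmult_le_pos; lra. unfold del.
      assert (0 < Rsqr (eps0 / (2 * Kb'))).
      { unfold Rsqr. assert (0 < eps0 / (2 * Kb')) by (apply Rdiv_lt_0_compat; lra). nra. }
      replace (C * (Rsqr (eps0 / (2 * Kb')) / (C + 1))) with (Rsqr (eps0 / (2 * Kb')) * (C / (C + 1))) by (field; lra).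
      assert (C / (C + 1) < 1) by (apply Rmult_lt_reg_r with (C + 1); [lra|]; unfold Rdiv; rewrite Rmult_assoc, Rinv_l; lra).
      nra. }
  replace (inner (bs j) (M2 (sg j) e)) with (inner (bs j) (M2 m e) - inner (bs j) T)
    by (unfold T; autorewrite with inE; ring).
  eapply Rle_lt_trans. apply Rabs_triang. rewrite Rabs_Ropp.
  pose proof (cs (bs j) T). pose proof (Hb j). pose proof (hnorm_pos T). pose proof (hnorm_pos (bs j)).
  assert (hnorm (bs j) <= Kb') by (unfold Kb'; pose proof (Rle_abs Kb); lra).
  assert (hnorm (bs j) * hnorm T <= Kb' * (eps0 / (2 * Kb'))).
  { apply Rmult_le_compat; lra. }
  replace (Kb' * (eps0 / (2 * Kb'))) with (eps0 / 2) in H5 by (field; lra). lra.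
Qed.

Lemma quad_diff {T : Hilbert} (M : T -> T) (a u w : T) : linear_op M -> symm M ->
  Mnorm2 M (vsub a u) - Mnorm2 M (vsub a w) = - 2 * inner (vsub a u) (M (vsub u w)) - Mnorm2 M (vsub u w).
Proof.
  intros HM HS. replace (vsub a w) with (vadd (vsub a u) (vsub u w)) by vext.
  set (b0 := vsub a u). set (e := vsub u w). unfold Mnorm2. rewrite (lin_add _ HM).
  autorewrite with inE. rewrite <- (HS e b0), (inner_sym (M e) b0). ring.
Qed.

Lemma id_lin {T : Hilbert} : linear_op (fun v : T => v).
Proof. split; auto. Qed.
Lemma id_symm {T : Hilbert} : symm (fun v : T => v).
Proof. intros a1 a2. reflexivity. Qed.

Lemma opial_half sg1 z1 p1 z2 p2 l1 l2 Q :
  sinc sg1 -> weak_cv (fun j => z (sg1 j)) z1 -> weak_cv (fun j => p (sg1 j)) p1 ->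
  saddle_point f h1 g h2 A B b xs0 z2 p2 ->
  Un_cv (Vf M1 M2 c x z p xs0 z1 p1) l1 -> Un_cv (Vf M1 M2 c x z p xs0 z2 p2) l2 ->
  Un_cv (fun k => c k * Mnorm2 (M2 k) (vsub z1 z2)) Q ->
  l1 - l2 = - inner (vsub p1 p2) (vsub p1 p2) - Q.
Proof.
  intros Hsg Hzw Hpw S2 Hl1 Hl2 HQ.
  assert (HM2l : forall k, linear_op (M2 k)) by (intro; apply M_lin; auto).
  destruct z_bound as [Kz HKz].
  set (e := vsub z1 z2). set (pi := vsub p1 p2).
  assert (Eq: forall k, Vf M1 M2 c x z p xs0 z1 p1 k - Vf M1 M2 c x z p xs0 z2 p2 k =
     (- 2 * inner (vsub (p k) p1) pi - inner pi pi)
     + (- 2 * (c k * inner (vsub (z k) z1) (M2 k e)) - c k * Mnorm2 (M2 k) e)).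
  { intro k. unfold Vf.
    pose proof (quad_diff (fun v => v) (p k) p1 p2 id_lin id_symm) as Q1. unfold Mnorm2 in Q1.
    pose proof (quad_diff (M2 k) (z k) z1 z2 (HM2l k) (M_symm M2 HM2s k)) as Q2.
    fold e pi in Q1, Q2. unfold Mnorm2 in *. pose proof (f_equal (fun t => c k * t) Q2) as Q3. simpl in Q3. lra. }
  assert (Hlim: Un_cv (fun j => Vf M1 M2 c x z p xs0 z1 p1 (sg1 j) - Vf M1 M2 c x z p xs0 z2 p2 (sg1 j))
                   ((- 2 * 0 - inner pi pi) + (- 2 * 0 - Q))).
  { apply (cv_ext (fun j => (- 2 * inner (vsub (p (sg1 j)) p1) pi - inner pi pi)
     + (- 2 * (c (sg1 j) * inner (vsub (z (sg1 j)) z1) (M2 (sg1 j) e)) - c (sg1 j) * Mnorm2 (M2 (sg1 j)) e))).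
    intro j. rewrite Eq. reflexivity.
    apply CV_plus; apply CV_minus.
    - apply CV_mult. apply cv_const.
      apply (cv_ext (fun j => inner (p (sg1 j)) pi - inner p1 pi)). intro; autorewrite with inE; ring.
      replace 0 with (inner p1 pi - inner p1 pi) by ring. apply CV_minus. apply Hpw. apply cv_const.
    - apply cv_const.
    - apply CV_mult. apply cv_const.
      apply (cv_bdd_mult0 (fun j => c (sg1 j)) _ (2 * gamma / nA ^ 2)).
      intro n. rewrite Rabs_pos_eq by (left; apply c_pos). apply c_ub.
      apply (weak_M_lemma (fun j => vsub (z (sg1 j)) z1) sg1 e (Kz + hnorm z1)); auto.
      intro w. rewrite inner_0_l. apply (cv_ext (fun j => inner (z (sg1 j)) w - inner z1 w)).
      intro; autorewrite with inE; ring.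
      replace 0 with (inner z1 w - inner z1 w) by ring. apply CV_minus. apply Hzw. apply cv_const.
      intro j. eapply Rle_trans. apply norm_sub_le. specialize (HKz (sg1 j)). lra.
    - apply (cv_sub (fun k => c k * Mnorm2 (M2 k) e)); auto. }
  assert (Hlim2: Un_cv (fun j => Vf M1 M2 c x z p xs0 z1 p1 (sg1 j) - Vf M1 M2 c x z p xs0 z2 p2 (sg1 j)) (l1 - l2)).
  { apply CV_minus; apply (cv_sub (Vf M1 M2 c x z p xs0 _ _)); auto. }
  pose proof (UL_sequence _ _ _ Hlim Hlim2). lra.
Qed.

Lemma opial sg1 z1 p1 sg2 z2 p2 :
  sinc sg1 -> weak_cv (fun j => z (sg1 j)) z1 -> weak_cv (fun j => p (sg1 j)) p1 ->
  sinc sg2 -> weak_cv (fun j => z (sg2 j)) z2 -> weak_cv (fun j => p (sg2 j)) p2 ->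
  z1 = z2 /\ p1 = p2.
Proof.
  intros Hs1 Hz1 Hp1 Hs2 Hz2 Hp2.
  assert (HM2l : forall k, linear_op (M2 k)) by (intro; apply M_lin; auto).
  pose proof (cluster_saddle sg1 z1 p1 Hs1 Hz1 Hp1) as S1.
  pose proof (cluster_saddle sg2 z2 p2 Hs2 Hz2 Hp2) as S2.
  destruct (V_conv xs0 z1 p1 S1) as [[l1 Hl1] _].
  destruct (V_conv xs0 z2 p2 S2) as [[l2 Hl2] _].
  set (e := vsub z1 z2).
  assert (Hq0: forall k, 0 <= c k * Mnorm2 (M2 k) e).
  { intro k. apply Rmult_le_pos. left; apply c_pos. apply Mn_pos; auto. }
  destruct (dec_cv (fun k => c k * Mnorm2 (M2 k) e)) as [Q HQ]; auto.
  { intro k. apply Rmult_le_compat. left; apply c_pos. apply Mn_pos; auto.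
    destruct (Hc k); lra. pose proof (HM2d k e). lra. }
  assert (HQ': Un_cv (fun k => c k * Mnorm2 (M2 k) (vsub z2 z1)) Q).
  { apply (cv_ext (fun k => c k * Mnorm2 (M2 k) e)); auto. intro k. unfold e.
    replace (vsub z2 z1) with (vscal (-1) (vsub z1 z2)) by vext. unfold Mnorm2.
    rewrite (lin_scal _ (HM2l k)). autorewrite with inE. f_equal. ring. }
  pose proof (opial_half sg1 z1 p1 z2 p2 l1 l2 Q Hs1 Hz1 Hp1 S2 Hl1 Hl2 HQ) as E1.
  pose proof (opial_half sg2 z2 p2 z1 p1 l2 l1 Q Hs2 Hz2 Hp2 S1 Hl2 Hl1 HQ') as E2.
  replace (inner (vsub p2 p1) (vsub p2 p1)) with (inner (vsub p1 p2) (vsub p1 p2)) in E2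
    by (autorewrite with inE; rewrite (inner_sym p1 p2); ring).
  assert (HQp: 0 <= Q) by (apply (cv_ge_ev _ _ _ 0 HQ); intros; auto).
  pose proof (inner_pos (vsub p1 p2)).
  assert (Hpi: inner (vsub p1 p2) (vsub p1 p2) = 0) by lra.
  assert (HQz: Q = 0) by lra.
  split; [| apply vsub_eq0, inner_def; auto].
  apply vsub_eq0, inner_def. fold e.
  destruct Hcase as [[al [Hal HP]] | [Bs [Had [be [Hbe HP]]]]].
  - assert (eps * (al * inner e e) <= Q).
    { apply (cv_ge_ev _ _ _ 0 HQ). intros k _.
      destruct (HP k) as [_ Hl]. specialize (Hl e). unfold Mnorm2 at 2 in Hl.
      rewrite inner_scal_r in Hl. unfold Mnorm2, op_minus_id in Hl. rewrite inner_sub_r, inner_scal_r in Hl.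
      pose proof (inner_pos e).
      assert (al * inner e e <= Mnorm2 (M2 k) e).
      { unfold Mnorm2. assert (0 <= L2 / 2 * inner e e) by (apply Rmult_le_pos; lra). lra. }
      apply Rmult_le_compat; try lra. apply Rmult_le_pos; lra. apply c_lb. }
    pose proof (inner_pos e). assert (0 <= al * inner e e) by (apply Rmult_le_pos; lra).
    assert (al * inner e e = 0) by nra. nra.
  - pose proof (feas_b sg1 z1 Hs1 Hz1) as F1. pose proof (feas_b sg2 z2 Hs2 Hz2) as F2.
    destruct HP as [_ Hl]. specialize (Hl e). unfold Mnorm2 in Hl. rewrite inner_scal_r in Hl.
    rewrite <- (Had e (B e)) in Hl. unfold e in Hl. rewrite (lin_sub _ HB), F1, F2, vsub_diag, inner_0_l in Hl.
    pose proof (inner_pos e). fold e in Hl. nra.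
Qed.

Lemma extract tau : sinc tau -> exists rho, sinc rho /\ exists z' p',
  weak_cv (fun j => z (tau (rho j))) z' /\ weak_cv (fun j => p (tau (rho j))) p'.
Proof.
  intro Ht. destruct z_bound as [Kz HKz]. destruct (p_bound xs0 zs0 ps0 Hs0) as [Kp HKp].
  destruct (weak_compact (fun n => z (tau n)) Kz (fun n => HKz (tau n))) as [s1 [Hs1 [z' Hz']]].
  destruct (weak_compact (fun n => p (tau (s1 n))) Kp (fun n => HKp (tau (s1 n)))) as [s2 [Hs2 [p' Hp']]].
  exists (fun j => s1 (s2 j)). split. apply sinc_comp; auto.
  exists z', p'. split; auto. apply (weak_sub (fun j => z (tau (s1 j))) z' s2 Hs2 Hz').
Qed.

Lemma not_cv_freq (u : nat -> R) l : ~ Un_cv u l ->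
  exists e, 0 < e /\ forall N, exists n, (N <= n)%nat /\ e <= Rabs (u n - l).
Proof.
  intro Hn. apply NNPP. intro Hcc. apply Hn. intros e He. apply NNPP. intro Hne. apply Hcc.
  exists e. split; auto. intro N. apply NNPP. intro Hx. apply Hne. exists N. intros n Hnn.
  unfold Rdist. destruct (Rlt_le_dec (Rabs (u n - l)) e); auto. exfalso. apply Hx. exists n. split; auto.
Qed.

Lemma main_conv : exists zb pb, saddle_point f h1 g h2 A B b xs0 zb pb /\
  weak_cv x xs0 /\ weak_cv z zb /\ weak_cv p pb.
Proof.
  destruct (extract (fun n => n) sinc_id) as [r0 [Hr0 [zb [pb [Hzb Hpb]]]]].
  exists zb, pb. split. apply (cluster_saddle r0 zb pb Hr0 Hzb Hpb).
  split. apply scv_weak, (x_scv xs0 zs0 ps0 Hs0).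
  split.
  - intro w. apply NNPP. intro Hn. destruct (not_cv_freq _ _ Hn) as [e [He Hf]].
    destruct (freq_sub (fun _ n => e <= Rabs (inner (z n) w - inner zb w))) as [tau [Ht Htau]].
    { intros _ N. apply Hf. }
    destruct (extract tau Ht) as [rho [Hrho [z' [p' [Hz' Hp']]]]].
    destruct (opial r0 zb pb (fun j => tau (rho j)) z' p' Hr0 Hzb Hpb (sinc_comp _ _ Ht Hrho) Hz' Hp') as [E _].
    subst z'. destruct (Hz' w e He) as [N HN]. specialize (HN N (le_n _)). specialize (Htau (rho N)).
    unfold Rdist in HN. lra.
  - intro w. apply NNPP. intro Hn. destruct (not_cv_freq _ _ Hn) as [e [He Hf]].
    destruct (freq_sub (fun _ n => e <= Rabs (inner (p n) w - inner pb w))) as [tau [Ht Htau]].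
    { intros _ N. apply Hf. }
    destruct (extract tau Ht) as [rho [Hrho [z' [p' [Hz' Hp']]]]].
    destruct (opial r0 zb pb (fun j => tau (rho j)) z' p' Hr0 Hzb Hpb (sinc_comp _ _ Ht Hrho) Hz' Hp') as [_ E].
    subst p'. destruct (Hp' w e He) as [N HN]. specialize (HN N (le_n _)). specialize (Htau (rho N)).
    unfold Rdist in HN. lra.
Qed.

End Base.
End Conseq.

Theorem mainTheorem1
  (H G K : Hilbert)
  (f : H -> ER) (g : G -> ER) (h1 : H -> R) (h2 : G -> R)
  (gh1 : H -> H) (gh2 : G -> G)
  (gamma L1 L2 : R) (A : H -> K) (B : G -> K) (b : K) (nA : R)
  (M1 : nat -> H -> H) (M2 : nat -> G -> G) (c : nat -> R) (eps : R)
  (x : nat -> H) (z : nat -> G) (p : nat -> K)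
  (Hgamma : 0 < gamma)
  (Hf : proper f /\ convex f /\ lsc f /\ strongly_convex gamma f)
  (Hg : proper g /\ convex g /\ lsc g)
  (Hh1 : convex_real h1 /\ frechet_gradient h1 gh1 /\ lipschitz L1 gh1)
  (Hh2 : convex_real h2 /\ frechet_gradient h2 gh2 /\ lipschitz L2 gh2)
  (HL1 : 0 <= L1) (HL2 : 0 <= L2)
  (HA : bounded_linear A) (HB : bounded_linear B)
  (HA0 : exists u : H, A u <> vzero)
  (HnA : opnorm_is A nA)
  (Hsaddle : exists xs zs ps, saddle_point f h1 g h2 A B b xs zs ps)
  (HM1 : forall k, in_Splus (M1 k) /\ in_Splus (op_minus_id (M1 k) (L1 / 2))
                   /\ loewner_ge (M1 k) (M1 (S k)))
  (HM2 : forall k, in_Splus (M2 k) /\ in_Splus (op_minus_id (M2 k) (L2 / 2))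
                   /\ loewner_ge (M2 k) (M2 (S k)))
  (Heps : 0 < eps < gamma / nA ^ 2)
  (Hc : forall k, c (S k) <= c k /\ eps <= c k <= 2 * gamma / nA ^ 2 - eps)
  (Hcase : (exists alpha, 0 < alpha /\
              forall k, in_Palpha alpha (op_minus_id (M2 k) (L2 / 2)))
        \/ (exists Bs : K -> G, is_adjoint B Bs /\
              exists beta, 0 < beta /\ in_Palpha beta (fun v => Bs (B v))))
  (Hiter : prox_AMA f g gh1 gh2 A B b M1 M2 c x z p) :
  exists xs zs ps,
    saddle_point f h1 g h2 A B b xs zs ps /\
    weak_cv x xs /\ weak_cv z zs /\ weak_cv p ps.
Proof.
  destruct Hf as [Hfp [Hfc [Hflsc Hfsc]]].
  destruct Hg as [Hgp [Hgc Hglsc]].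
  destruct Hh1 as [Hh1c [Hh1g Hh1l]].
  destruct Hh2 as [Hh2c [Hh2g Hh2l]].
  assert (HAl : linear_op A) by (apply bl_lin; auto).
  assert (HBl : linear_op B) by (apply bl_lin; auto).
  pose proof (opnorm_bound A nA HAl HnA) as HnA'.
  pose proof (opnorm_pos A nA HAl HnA HA0) as HnApos.
  destruct (bl_bound B HB) as [CB [_ HCB]].
  destruct Hsaddle as [xs0 [zs0 [ps0 Hs0]]].
  assert (Heps2 : eps * nA ^ 2 < gamma).
  { destruct Heps as [He1 He2]. assert (0 < nA ^ 2) by (apply pow_lt; lra).
    apply Rmult_lt_compat_r with (r := nA ^ 2) in He2; auto.
    unfold Rdiv in He2. rewrite Rmult_assoc, Rinv_l in He2 by lra. lra. }
  destruct (main_conv f g h1 h2 gh1 gh2 gamma L1 L2 A B b nA M1 M2 c eps x z p Hgamma Hfp Hgp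
    (sconv_strong f gamma Hfsc) (sconv_convex g Hgc) Hh1c Hh1g Hh1l Hh2c Hh2g Hh2l HL1 HL2 HAl HBl HnA' HnApos
    (fun k => proj1 (HM1 k)) (fun k => proj2 (proj2 (HM1 k)))
    (fun k => proj1 (HM2 k)) (fun k => proj2 (proj2 (HM2 k)))
    (proj1 Heps) Heps2 Hc Hiter (fun k => proj1 (proj2 (HM1 k))) (fun k => proj1 (proj2 (HM2 k)))
    xs0 zs0 ps0 Hs0 Hcase Hflsc Hglsc (sconv_convex f Hfc) CB HCB) as [zb [pb [S [Wx [Wz Wp]]]]].
  exists xs0, zb, pb. auto.
Qed.
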